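(* Let $\mathcal P=(P_n)_{n\ge1}$ be a filtration on a Hilbert space $H$. Let $\mathcal J$ be the smallest closed subalgebra of $\mathcal F^{\mathcal P}$ containing all sequences $(P_nKP_n)_{n\ge1}$ with $K$ a compact operator on $H$. Then $\mathcal G^{\mathcal P}\subseteq\mathcal J$ if and only if $\mathcal P$ is injective, i.e. $P_n\ne P_m$ whenever $n\ne m$.
   Context: A filtration on a Hilbert space $H$ is a sequence $(P_n)$ of finite-rank orthogonal projections on $H$ converging strongly to the identity. $\mathcal F^{\mathcal P}$ is the set of all sequences $(A_n)$ of operators $A_n:\operatorname{im}P_n\to\operatorname{im}P_n$ such that $(A_nP_n)$ converges $^*$-strongly (i.e. $A_nP_n$ and $(A_nP_n)^*$ converge strongly) on $H$; with entrywise operations and the norm $\sup_n\|A_n\|$ it is a $C^*$-algebra. $\mathcal G^{\mathcal P}$ is the closed ideal of $\mathcal F^{\mathcal P}$ consisting of sequences with $\|A_n\|\to0$. *)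

(* Defs.v *)
From Stdlib Require Import Reals List.
Open Scope R_scope.
Set Implicit Arguments.

Definition C : Type := (R * R)%type.
Definition C0 : C := (0, 0).
Definition C1 : C := (1, 0).
Definition Cadd (z w : C) : C := (fst z + fst w, snd z + snd w).
Definition Cmul (z w : C) : C :=
  (fst z * fst w - snd z * snd w, fst z * snd w + snd z * fst w).
Definition Cconj (z : C) : C := (fst z, - snd z).

Record Hilbert := {
  hcar :> Type;
  hzero : hcar;
  hadd : hcar -> hcar -> hcar;
  hopp : hcar -> hcar;
  hscal : C -> hcar -> hcar;
  inner : hcar -> hcar -> C;
  hadd_assoc : forall x y z, hadd x (hadd y z) = hadd (hadd x y) z;
  hadd_comm : forall x y, hadd x y = hadd y x;
  hadd_zero : forall x, hadd x hzero = x;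
  hadd_opp : forall x, hadd x (hopp x) = hzero;
  hscal_one : forall x, hscal C1 x = x;
  hscal_mul : forall a b x, hscal a (hscal b x) = hscal (Cmul a b) x;
  hscal_addv : forall a x y, hscal a (hadd x y) = hadd (hscal a x) (hscal a y);
  hscal_adds : forall a b x, hscal (Cadd a b) x = hadd (hscal a x) (hscal b x);
  inner_add : forall x y z, inner (hadd x y) z = Cadd (inner x z) (inner y z);
  inner_scal : forall a x y, inner (hscal a x) y = Cmul a (inner x y);
  inner_sym : forall x y, inner y x = Cconj (inner x y);
  inner_pos : forall x, 0 <= fst (inner x x);
  inner_def : forall x, inner x x = C0 -> x = hzero;
  hcomplete : forall u : nat -> hcar,
    (forall eps, eps > 0 -> exists N, forall n m, (n >= N)%nat -> (m >= N)%nat ->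
        sqrt (fst (inner (hadd (u n) (hopp (u m))) (hadd (u n) (hopp (u m))))) < eps) ->
    exists l, forall eps, eps > 0 -> exists N, forall n, (n >= N)%nat ->
        sqrt (fst (inner (hadd (u n) (hopp l)) (hadd (u n) (hopp l)))) < eps
}.

Arguments hzero {h}.
Arguments hadd {h}.
Arguments hopp {h}.
Arguments hscal {h}.
Arguments inner {h}.

Section Ops.
Variable H : Hilbert.

Definition hsub (x y : H) : H := hadd x (hopp y).
Definition hnorm (x : H) : R := sqrt (fst (inner x x)).

Definition hconv (u : nat -> H) (l : H) : Prop :=
  forall eps, eps > 0 -> exists N, forall n, (n >= N)%nat -> hnorm (hsub (u n) l) < eps.

Definition op := H -> H.

Definition is_linear (T : op) : Prop :=
  (forall x y, T (hadd x y) = hadd (T x) (T y)) /\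
  (forall a x, T (hscal a x) = hscal a (T x)).

Definition opnorm_le (T : op) (r : R) : Prop :=
  forall x, hnorm (T x) <= r * hnorm x.

Definition is_adjoint (T S : op) : Prop :=
  forall x y, inner (T x) y = inner x (S y).

Definition orth_proj (P : op) : Prop :=
  is_linear P /\ (forall x, P (P x) = P x) /\ is_adjoint P P.

Fixpoint lincomb (cs : list C) (vs : list H) : H :=
  match cs, vs with
  | c :: cs', v :: vs' => hadd (hscal c v) (lincomb cs' vs')
  | _, _ => hzero
  end.

Definition finite_rank (T : op) : Prop :=
  exists vs : list H, forall x, exists cs : list C,
    length cs = length vs /\ T x = lincomb cs vs.

Definition compact (K : op) : Prop :=
  is_linear K /\
  forall u : nat -> H, (exists M, forall k, hnorm (u k) <= M) ->
    exists phi : nat -> nat, (forall k, (phi k < phi (S k))%nat) /\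
      exists y, hconv (fun k => K (u (phi k))) y.

Definition filtration (P : nat -> op) : Prop :=
  (forall n, orth_proj (P n) /\ finite_rank (P n)) /\
  (forall x, hconv (fun n => P n x) x).

Definition injective_filtration (P : nat -> op) : Prop :=
  forall n m, n <> m -> exists x, P n x <> P m x.

Definition strong_conv (T : nat -> op) : Prop :=
  forall x, exists y, hconv (fun n => T n x) y.

(** Sequences (A_n), A_n : im P_n -> im P_n, are represented by operators
    A_n on H with A_n = P_n A_n P_n (so A_n P_n is the operator on H). *)
Definition opseq := nat -> op.

Definition inF (P : nat -> op) (A : opseq) : Prop :=
  (forall n, is_linear (A n) /\ forall x, A n x = P n (A n (P n x))) /\
  strong_conv (fun n x => A n (P n x)) /\
  exists Sa : opseq, (forall n, is_adjoint (fun x => A n (P n x)) (Sa n)) /\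
                     strong_conv Sa.

Definition seq_zero : opseq := fun _ _ => hzero.
Definition seq_add (A B : opseq) : opseq := fun n x => hadd (A n x) (B n x).
Definition seq_scal (c : C) (A : opseq) : opseq := fun n x => hscal c (A n x).
Definition seq_mul (A B : opseq) : opseq := fun n x => A n (B n x).
Definition seq_sub (A B : opseq) : opseq := fun n x => hsub (A n x) (B n x).

Definition inG (P : nat -> op) (A : opseq) : Prop :=
  inF P A /\
  forall eps, eps > 0 -> exists N, forall n, (n >= N)%nat -> opnorm_le (A n) eps.

Definition closed_subalg (P : nat -> op) (S : opseq -> Prop) : Prop :=
  (forall A, S A -> inF P A) /\
  S seq_zero /\
  (forall A B, S A -> S B -> S (seq_add A B)) /\
  (forall c A, S A -> S (seq_scal c A)) /\
  (forall A B, S A -> S B -> S (seq_mul A B)) /\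
  (forall A, inF P A ->
     (forall eps, eps > 0 -> exists B, S B /\ forall n, opnorm_le (seq_sub A B n) eps) ->
     S A).

Definition inJ (P : nat -> op) (A : opseq) : Prop :=
  forall S, closed_subalg P S ->
    (forall K, compact K -> S (fun n x => P n (K (P n x)))) ->
    S A.

End Ops.

(* Main.v *)
Require Import Defs.
From Stdlib Require Import Reals Lra Psatz Classical ClassicalEpsilon FunctionalExtensionality List ZArith Arith Bool.
Open Scope R_scope.

Lemma Cext (a b c d : R) : a = c -> b = d -> (a, b) = (c, d).
Proof. intros; subst; reflexivity. Qed.

Arguments hadd_assoc {h}.
Arguments hadd_comm {h}.
Arguments hadd_zero {h}.
Arguments hadd_opp {h}.
Arguments hscal_one {h}.
Arguments hscal_mul {h}.
Arguments hscal_addv {h}.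
Arguments hscal_adds {h}.
Arguments inner_add {h}.
Arguments inner_scal {h}.
Arguments inner_sym {h}.
Arguments inner_pos {h}.
Arguments inner_def {h}.

Ltac csimpl := unfold Cadd, Cmul, Cconj, Defs.C0, Defs.C1; simpl.
Ltac csimpl_all := unfold Cadd, Cmul, Cconj, Defs.C0, Defs.C1 in *; simpl in *.

Section Basic.
Context {H : Hilbert}.
Implicit Types x y z : H.

Lemma hadd_0l x : hadd hzero x = x.
Proof. rewrite hadd_comm; apply hadd_zero. Qed.

Lemma hadd_cancel x y z : hadd x y = hadd x z -> y = z.
Proof.
  intro E. assert (E2 : hadd (hopp x) (hadd x y) = hadd (hopp x) (hadd x z)) by (rewrite E; auto).
  rewrite !hadd_assoc in E2. rewrite (hadd_comm (hopp x) x), hadd_opp, !hadd_0l in E2. exact E2.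
Qed.

Lemma hadd_zero_uniq x y : hadd x y = x -> y = hzero.
Proof. intro E. apply (hadd_cancel x). rewrite hadd_zero; exact E. Qed.

Lemma hscal_C0 x : hscal Defs.C0 x = hzero.
Proof.
  apply (hadd_zero_uniq (hscal Defs.C0 x)). rewrite <- (hscal_adds Defs.C0 Defs.C0 x). f_equal. csimpl. apply Cext; ring.
Qed.

Lemma hscal_hzero a : hscal a (@hzero H) = hzero.
Proof.
  apply (hadd_zero_uniq (hscal a hzero)). rewrite <- hscal_addv, hadd_zero. reflexivity.
Qed.

Lemma hopp_scal x : hopp x = hscal (-1, 0) x.
Proof.
  apply (hadd_cancel x). rewrite hadd_opp.
  replace (hadd x (hscal (-1, 0) x)) with (hadd (hscal Defs.C1 x) (hscal (-1, 0) x)) by (rewrite hscal_one; auto).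
  rewrite <- hscal_adds. rewrite <- (hscal_C0 x). f_equal. csimpl. apply Cext; ring.
Qed.

Lemma hsub_eq0 x y : hsub H x y = hzero -> x = y.
Proof.
  unfold hsub. intro E. apply (hadd_cancel (hopp y)). rewrite (hadd_comm _ x), E, hadd_comm, hadd_opp. reflexivity.
Qed.

Lemma hsub_diag x : hsub H x x = hzero.
Proof. apply hadd_opp. Qed.

Lemma inner_0l y : inner (@hzero H) y = Defs.C0.
Proof.
  rewrite <- (hscal_C0 hzero). rewrite inner_scal. csimpl. apply Cext; ring.
Qed.

Lemma inner_0r x : inner x (@hzero H) = Defs.C0.
Proof. rewrite inner_sym, inner_0l. csimpl. apply Cext; ring. Qed.

Lemma inner_add_r x y z : inner x (hadd y z) = Cadd (inner x y) (inner x z).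
Proof.
  rewrite inner_sym, inner_add, (inner_sym x y), (inner_sym x z).
  destruct (inner y x), (inner z x). csimpl. apply Cext; ring.
Qed.

Lemma inner_scal_r a x y : inner x (hscal a y) = Cmul (Cconj a) (inner x y).
Proof.
  rewrite inner_sym, inner_scal, (inner_sym x y). destruct a, (inner y x). csimpl. apply Cext; ring.
Qed.

Lemma inner_opp_l x y : inner (hopp x) y = Cmul (-1,0) (inner x y).
Proof. rewrite hopp_scal, inner_scal. reflexivity. Qed.

Lemma inner_opp_r x y : inner x (hopp y) = Cmul (-1,0) (inner x y).
Proof. rewrite hopp_scal, inner_scal_r. destruct (inner x y). csimpl. apply Cext; ring. Qed.

Lemma inner_sub_l x y z : inner (hsub H x y) z = Cadd (inner x z) (Cmul (-1,0) (inner y z)).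
Proof. unfold hsub. rewrite inner_add, inner_opp_l. reflexivity. Qed.

Lemma inner_sub_r x y z : inner x (hsub H y z) = Cadd (inner x y) (Cmul (-1,0) (inner x z)).
Proof. unfold hsub. rewrite inner_add_r, inner_opp_r. reflexivity. Qed.

Definition ns x := fst (inner x x).

Lemma snd_inner_self x : snd (inner x x) = 0.
Proof.
  pose proof (inner_sym x x) as E. destruct (inner x x) as [a b]. csimpl.
  injection E; intros; lra.
Qed.

Lemma inner_self x : inner x x = (ns x, 0).
Proof. unfold ns. rewrite <- (snd_inner_self x). destruct (inner x x); reflexivity. Qed.

Lemma ns_nonneg x : 0 <= ns x.
Proof. apply inner_pos. Qed.

Lemma ns_eq0 x : ns x = 0 -> x = hzero.
Proof. intro E. apply inner_def. rewrite inner_self, E. reflexivity. Qed.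

Lemma ns_zero : ns (@hzero H) = 0.
Proof. unfold ns. rewrite inner_0l. reflexivity. Qed.

Lemma ns_add x y : ns (hadd x y) = ns x + ns y + 2 * fst (inner x y).
Proof.
  unfold ns. rewrite inner_add, !inner_add_r. rewrite (inner_sym y x).
  destruct (inner x x), (inner x y), (inner y y). csimpl. ring.
Qed.

Lemma ns_scal a x : ns (hscal a x) = (fst a * fst a + snd a * snd a) * ns x.
Proof.
  unfold ns. rewrite inner_scal, inner_scal_r. pose proof (snd_inner_self x).
  destruct a, (inner x x). csimpl. subst. ring.
Qed.

Lemma ns_opp x : ns (hopp x) = ns x.
Proof. rewrite hopp_scal, ns_scal. simpl. ring. Qed.

Definition cn2 (w : Defs.C) := fst w * fst w + snd w * snd w.

Lemma cn2_nonneg (w : Defs.C) : 0 <= cn2 w.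
Proof. unfold cn2. nra. Qed.

Lemma CS2 x y : cn2 (inner x y) <= ns x * ns y.
Proof.
  destruct (Req_dec (ns y) 0) as [Hy|Hy].
  - apply ns_eq0 in Hy. subst. rewrite inner_0r, ns_zero. unfold cn2; simpl. lra.
  - pose proof (ns_nonneg y). assert (Hp : 0 < ns y) by lra.
    destruct (inner x y) as [a b] eqn:E.
    set (s := (- a / ns y, - b / ns y)).
    pose proof (ns_nonneg (hadd x (hscal s y))) as N.
    rewrite ns_add, ns_scal, inner_scal_r, E in N. unfold s in N. csimpl_all. unfold cn2; simpl.
    assert (N2 : 0 <= ns x - (a*a + b*b) / ns y).
    { eapply Rle_trans; [exact N|]. right. field. lra. }
    apply Rmult_le_compat_r with (r := ns y) in N2; [|lra].
    replace ((ns x - (a * a + b * b) / ns y) * ns y) with (ns x * ns y - (a*a+b*b)) in N2 by (field; lra).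
    lra.
Qed.

Lemma hnorm_sq x : hnorm H x * hnorm H x = ns x.
Proof. unfold hnorm. apply sqrt_sqrt. apply ns_nonneg. Qed.

Lemma hnorm_nonneg x : 0 <= hnorm H x.
Proof. apply sqrt_pos. Qed.

Lemma hnorm_le x r : 0 <= r -> ns x <= r * r -> hnorm H x <= r.
Proof.
  intros Hr Hn. unfold hnorm. rewrite <- (sqrt_square r Hr). apply sqrt_le_1_alt. exact Hn.
Qed.

Lemma le_sq_le a b : 0 <= b -> a * a <= b * b -> a <= b.
Proof. intros. nra. Qed.

Lemma hnorm_zero : hnorm H (@hzero H) = 0.
Proof. unfold hnorm. fold (ns hzero). rewrite ns_zero. apply sqrt_0. Qed.

Lemma hnorm_eq0 x : hnorm H x = 0 -> x = hzero.
Proof. intro E. apply ns_eq0. rewrite <- hnorm_sq, E. ring. Qed.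

Lemma cmod_inner x y : sqrt (cn2 (inner x y)) <= hnorm H x * hnorm H y.
Proof.
  pose proof (hnorm_nonneg x); pose proof (hnorm_nonneg y).
  apply le_sq_le. nra. rewrite sqrt_sqrt by apply cn2_nonneg.
  replace (hnorm H x * hnorm H y * (hnorm H x * hnorm H y)) with (ns x * ns y)
    by (rewrite <- !hnorm_sq; ring). apply CS2.
Qed.

Lemma fst_le_cmod (w : Defs.C) : fst w <= sqrt (cn2 w).
Proof.
  destruct (Rle_dec (fst w) 0). pose proof (sqrt_pos (cn2 w)); lra.
  apply le_sq_le. apply sqrt_pos. rewrite sqrt_sqrt by apply cn2_nonneg. unfold cn2. nra.
Qed.

Lemma hnorm_triangle x y : hnorm H (hadd x y) <= hnorm H x + hnorm H y.
Proof.
  pose proof (hnorm_nonneg x); pose proof (hnorm_nonneg y).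
  apply hnorm_le. lra. rewrite ns_add. rewrite <- !hnorm_sq.
  pose proof (fst_le_cmod (inner x y)). pose proof (cmod_inner x y). nra.
Qed.

Lemma hnorm_scal a x : hnorm H (hscal a x) = sqrt (cn2 a) * hnorm H x.
Proof.
  unfold hnorm. fold (ns (hscal a x)) (ns x). rewrite ns_scal. rewrite sqrt_mult_alt. reflexivity. apply cn2_nonneg.
Qed.

Lemma hnorm_opp x : hnorm H (hopp x) = hnorm H x.
Proof. unfold hnorm. fold (ns (hopp x)) (ns x). rewrite ns_opp. reflexivity. Qed.

Lemma hnorm_sub_triangle x y : hnorm H (hsub H x y) <= hnorm H x + hnorm H y.
Proof. unfold hsub. rewrite <- (hnorm_opp y). apply hnorm_triangle. Qed.

End Basic.

Section Ops2.
Context {H : Hilbert}.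
Implicit Types x y z : H.
Notation hn := (hnorm H).
Notation hs := (hsub H).

Lemma hadd_sub x y : hadd y (hs x y) = x.
Proof. unfold hsub. rewrite hadd_comm, <- hadd_assoc, (hadd_comm (hopp y)), hadd_opp, hadd_zero. reflexivity. Qed.

Lemma hsub_0r x : hs x hzero = x.
Proof.
  unfold hsub. assert (E : hopp (@hzero H) = hzero).
  { rewrite hopp_scal. apply hscal_hzero. }
  rewrite E, hadd_zero. reflexivity.
Qed.

Lemma hopp_add x y : hopp (hadd x y) = hadd (hopp x) (hopp y).
Proof. rewrite !hopp_scal, hscal_addv. reflexivity. Qed.

Lemma hopp_opp x : hopp (hopp x) = x.
Proof. rewrite !hopp_scal, hscal_mul. rewrite <- (hscal_one x) at 2. f_equal. csimpl. apply Cext; ring. Qed.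

Lemma hsub_add4 a b c d : hs (hadd a b) (hadd c d) = hadd (hs a c) (hs b d).
Proof.
  unfold hsub. rewrite hopp_add. rewrite <- !hadd_assoc. f_equal.
  rewrite !hadd_assoc. f_equal. apply hadd_comm.
Qed.

Lemma hsub_sub a b c : hs a c = hadd (hs a b) (hs b c).
Proof.
  unfold hsub. rewrite <- hadd_assoc. f_equal. rewrite hadd_assoc, (hadd_comm _ b), hadd_opp, hadd_0l. reflexivity.
Qed.

Lemma hsub_scal c a b : hs (hscal c a) (hscal c b) = hscal c (hs a b).
Proof. unfold hsub. rewrite hscal_addv. f_equal. rewrite !hopp_scal, !hscal_mul. f_equal. csimpl. apply Cext; ring. Qed.

Lemma hsub_comm_norm a b : hn (hs a b) = hn (hs b a).
Proof.
  replace (hs b a) with (hopp (hs a b)). apply eq_sym, hnorm_opp.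
  unfold hsub. rewrite hopp_add, hopp_opp, hadd_comm. reflexivity.
Qed.

Lemma hscal_C0' a x : fst a = 0 -> snd a = 0 -> hscal a x = hzero.
Proof. destruct a; simpl; intros; subst. apply hscal_C0. Qed.

Lemma lin_zero (T : op H) : is_linear T -> T hzero = hzero.
Proof. intros [Ha Hs]. rewrite <- (hscal_C0 hzero), Hs, !hscal_C0. reflexivity. Qed.

Lemma lin_opp (T : op H) x : is_linear T -> T (hopp x) = hopp (T x).
Proof. intros [Ha Hs]. rewrite !hopp_scal, Hs. reflexivity. Qed.

Lemma lin_sub (T : op H) x y : is_linear T -> T (hs x y) = hs (T x) (T y).
Proof. intros L. unfold hsub. rewrite (proj1 L), lin_opp; auto. Qed.

Lemma lin_lincomb (T : op H) cs vs : is_linear T -> T (lincomb H cs vs) = lincomb H cs (map T vs).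
Proof.
  intros L. revert vs; induction cs as [|c cs IH]; intros [|v vs]; simpl; try apply lin_zero; auto.
  rewrite (proj1 L), (proj2 L), IH. reflexivity.
Qed.

Lemma proj_idem (P : op H) x : orth_proj P -> P (P x) = P x.
Proof. intros [_ [I _]]; auto. Qed.
Lemma proj_adj (P : op H) x y : orth_proj P -> inner (P x) y = inner x (P y).
Proof. intros [_ [_ A]]; auto. Qed.
Lemma proj_lin (P : op H) : orth_proj P -> is_linear P.
Proof. intros [L _]; auto. Qed.

Lemma proj_orth (P : op H) x y : orth_proj P -> inner (P x) (hs y (P y)) = Defs.C0.
Proof.
  intro HP. rewrite inner_sub_r, (proj_adj P x y), (proj_adj P x (P y)), (proj_idem P y) by auto.
  destruct (inner x (P y)). csimpl. apply Cext; ring.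
Qed.

Lemma proj_ns (P : op H) x : orth_proj P -> ns x = ns (P x) + ns (hs x (P x)).
Proof.
  intro HP. rewrite <- (hadd_sub x (P x)) at 1. rewrite ns_add, proj_orth by auto. simpl. ring.
Qed.

Lemma proj_contr (P : op H) x : orth_proj P -> hn (P x) <= hn x.
Proof.
  intro HP. pose proof (proj_ns P x HP). pose proof (ns_nonneg (hs x (P x))).
  apply le_sq_le. apply hnorm_nonneg. rewrite !hnorm_sq. lra.
Qed.

Lemma cn2_real r : cn2 (r, 0) = r * r.
Proof. unfold cn2; simpl; ring. Qed.

Lemma sqrt_cn2_real r : sqrt (cn2 (r, 0)) = Rabs r.
Proof. rewrite cn2_real. rewrite <- (sqrt_Rsqr_abs r). unfold Rsqr. reflexivity. Qed.

Lemma hnorm_scal_real r x : hn (hscal (r, 0) x) = Rabs r * hn x.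
Proof. rewrite hnorm_scal, sqrt_cn2_real. reflexivity. Qed.

Definition bounded (T : op H) := exists M, 0 <= M /\ opnorm_le T M.

Lemma opnorm_le_mono (T : op H) r s : r <= s -> opnorm_le T r -> opnorm_le T s.
Proof. intros Hrs HT x. specialize (HT x). pose proof (hnorm_nonneg x). nra. Qed.

Lemma zero_small_eq x : (forall eps, eps > 0 -> hn x <= eps) -> x = hzero.
Proof.
  intro Hs. apply hnorm_eq0. pose proof (hnorm_nonneg x).
  destruct (Req_dec (hn x) 0); auto. specialize (Hs (hn x / 2)). lra.
Qed.

Lemma hconv_ext u v l : (forall n, u n = v n) -> hconv H u l -> hconv H v l.
Proof. intros E Hc eps He. destruct (Hc eps He) as [N HN]. exists N. intros n Hn. rewrite <- E. auto. Qed.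

Lemma hconv_ev_zero (u : nat -> H) N : (forall n, (n >= N)%nat -> u n = hzero) -> hconv H u hzero.
Proof.
  intros E eps He. exists N. intros n Hn. rewrite E by auto. rewrite hsub_diag, hnorm_zero. lra.
Qed.

Lemma hconv_add u v a b : hconv H u a -> hconv H v b -> hconv H (fun n => hadd (u n) (v n)) (hadd a b).
Proof.
  intros Hu Hv eps He. destruct (Hu (eps/2)) as [N1 H1]; [lra|]. destruct (Hv (eps/2)) as [N2 H2]; [lra|].
  exists (max N1 N2). intros n Hn. rewrite hsub_add4.
  eapply Rle_lt_trans; [apply hnorm_triangle|].
  specialize (H1 n ltac:(lia)); specialize (H2 n ltac:(lia)). lra.
Qed.

Lemma hconv_scal c u a : hconv H u a -> hconv H (fun n => hscal c (u n)) (hscal c a).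
Proof.
  intros Hu eps He. set (k := sqrt (cn2 c) + 1). assert (Hk : 0 < k) by (unfold k; pose proof (sqrt_pos (cn2 c)); lra).
  destruct (Hu (eps / k)) as [N HN]. apply Rdiv_lt_0_compat; lra.
  exists N. intros n Hn. rewrite hsub_scal, hnorm_scal. specialize (HN n Hn).
  pose proof (sqrt_pos (cn2 c)). pose proof (hnorm_nonneg (hs (u n) a)).
  apply Rle_lt_trans with (k * hn (hs (u n) a)). unfold k; nra.
  replace eps with (k * (eps / k)) by (field; lra). apply Rmult_lt_compat_l; lra.
Qed.

Lemma hconv_bounded_op (T : op H) M u a : is_linear T -> opnorm_le T M -> hconv H u a ->
  hconv H (fun n => T (u n)) (T a).
Proof.
  intros L HT Hu eps He. set (k := Rabs M + 1).
  destruct (Hu (eps / k)) as [N HN]. apply Rdiv_lt_0_compat; unfold k in *; pose proof (Rabs_pos M); lra.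
  exists N. intros n Hn. rewrite <- lin_sub by auto. specialize (HN n Hn).
  pose proof (HT (hs (u n) a)). pose proof (hnorm_nonneg (hs (u n) a)). pose proof (Rabs_pos M).
  pose proof (Rle_abs M).
  assert (Hk : 0 < k) by (unfold k; lra).
  apply Rle_lt_trans with (k * hn (hs (u n) a)). unfold k; nra.
  replace eps with (k * (eps / k)) by (field; lra). apply Rmult_lt_compat_l; lra.
Qed.

Lemma hconv_small u a : (forall eps, eps > 0 -> exists N, forall n, (n >= N)%nat -> hn (hs (u n) a) <= eps) -> hconv H u a.
Proof.
  intros Hs eps He. destruct (Hs (eps/2)) as [N HN]; [lra|]. exists N. intros n Hn. specialize (HN n Hn). lra.
Qed.

Lemma hconv_unique u a b : hconv H u a -> hconv H u b -> a = b.
Proof.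
  intros Ha Hb. apply hsub_eq0, zero_small_eq. intros eps He.
  destruct (Ha (eps/2)) as [N1 H1]; [lra|]. destruct (Hb (eps/2)) as [N2 H2]; [lra|].
  specialize (H1 (max N1 N2) ltac:(lia)); specialize (H2 (max N1 N2) ltac:(lia)).
  rewrite (hsub_sub a (u (max N1 N2)) b). eapply Rle_trans; [apply hnorm_triangle|].
  rewrite hsub_comm_norm. lra.
Qed.

End Ops2.
Arguments hconv_add {H u v a b}.
Arguments hconv_scal {H} c {u a}.
Arguments hconv_bounded_op {H T M u a}.

Lemma fchoice {A B : Type} (P : A -> B -> Prop) : (forall a, exists b, P a b) -> exists f, forall a, P a (f a).
Proof.
  intro Hx. exists (fun a => proj1_sig (constructive_indefinite_description _ (Hx a))).
  intro a. exact (proj2_sig (constructive_indefinite_description _ (Hx a))).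
Qed.

Lemma cn2_eq0 (w : Defs.C) : cn2 w = 0 -> w = Defs.C0.
Proof. destruct w as [a b]; unfold cn2; simpl; intro E. unfold Defs.C0. apply Cext; nra. Qed.

Lemma cn2_mul (a b : Defs.C) : cn2 (Cmul a b) = cn2 a * cn2 b.
Proof. destruct a, b; unfold cn2; csimpl; ring. Qed.

Lemma invS_pos (j : nat) : 0 < / INR (S j).
Proof. apply Rinv_0_lt_compat, lt_0_INR; lia. Qed.

Lemma small_invS (eps : R) : 0 < eps -> exists J, forall i, (i >= J)%nat -> / INR (S i) < eps.
Proof.
  intro He. destruct (archimed_cor1 eps He) as [N [HN HN0]]. exists N. intros i Hi.
  eapply Rle_lt_trans; [|exact HN]. apply Rinv_le_contravar. apply lt_0_INR; lia. apply le_INR; lia.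
Qed.

Lemma le_of_small x d c : 0 <= c -> (forall del, 0 < del <= 1 -> x <= d + c * del) -> x <= d.
Proof.
  intros Hc Hs. apply Rnot_lt_le. intro Hlt.
  set (del := Rmin 1 ((x - d) / (2 * (c + 1)))).
  assert (Hq : 0 < (x - d) / (2 * (c + 1))) by (apply Rdiv_lt_0_compat; lra).
  assert (H1 : 0 < del <= 1) by (unfold del; split; [apply Rmin_glb_lt; lra | apply Rmin_l]).
  assert (H2 : del <= (x - d) / (2 * (c + 1))) by apply Rmin_r.
  specialize (Hs del H1). assert (c * del <= (x - d) / 2).
  { apply Rle_trans with ((c+1) * ((x - d) / (2 * (c + 1)))). nra. right. field. lra. }
  lra.
Qed.

Lemma small_zero x : 0 <= x -> (forall del, 0 < del -> x <= del) -> x = 0.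
Proof. intros H0 Hs. destruct (Req_dec x 0); auto. specialize (Hs (x/2)). lra. Qed.

Section Riesz.
Context {H : Hilbert}.
Implicit Types x y z : H.
Notation hn := (hnorm H).
Notation hs := (hsub H).

Lemma ns_sub a b : ns (hs a b) = ns a + ns b - 2 * fst (inner a b).
Proof. unfold hsub. rewrite ns_add, ns_opp, inner_opp_r. destruct (inner a b); csimpl; ring. Qed.

Lemma parallelogram a b : ns (hadd a b) + ns (hs a b) = 2 * ns a + 2 * ns b.
Proof. rewrite ns_add, ns_sub. ring. Qed.

Lemma hnorm_sub_le_ns a b r : 0 <= r -> ns (hs a b) <= r * r -> hn (hs a b) <= r.
Proof. intros; apply hnorm_le; auto. Qed.

Lemma L1 x a b : hs (hs x a) (hs x b) = hs b a.
Proof.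
  apply (hadd_cancel (hs x b)). rewrite hadd_sub, <- hsub_sub. reflexivity.
Qed.

Lemma L2 x a b : hadd (hs x a) (hs x b) = hs (hadd x x) (hadd a b).
Proof. rewrite hsub_add4. reflexivity. Qed.

Lemma hscal_two x : hscal (2, 0) x = hadd x x.
Proof. replace (2, 0) with (Cadd Defs.C1 Defs.C1) by (csimpl; apply Cext; ring). rewrite hscal_adds, hscal_one. reflexivity. Qed.

Lemma L3 x s : hscal (2,0) (hs x (hscal (/2, 0) s)) = hs (hadd x x) s.
Proof.
  rewrite <- hsub_scal, hscal_two, hscal_mul. f_equal. rewrite <- (hscal_one s) at 2. f_equal. csimpl. apply Cext; field.
Qed.

Lemma ns_scal2 x : ns (hscal (2,0) x) = 4 * ns x.
Proof. rewrite ns_scal. simpl. ring. Qed.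

Lemma ns_lt_hn x r : 0 < r -> ns x < r * r -> hn x < r.
Proof.
  intros Hr Hx. unfold hnorm. fold (ns x). rewrite <- (sqrt_square r) by lra. apply sqrt_lt_1_alt. split; auto. apply ns_nonneg.
Qed.

Definition clinear (f : H -> Defs.C) := (forall x y, f (hadd x y) = Cadd (f x) (f y)) /\ (forall a x, f (hscal a x) = Cmul a (f x)).

Lemma clin_zero f : clinear f -> f hzero = Defs.C0.
Proof. intros [Ha Hs]. rewrite <- (hscal_C0 hzero), Hs. csimpl. apply Cext; ring. Qed.

Lemma clin_sub f x y : clinear f -> f (hs x y) = Cadd (f x) (Cmul (-1,0) (f y)).
Proof. intros [Ha Hs]. unfold hsub. rewrite Ha, hopp_scal, Hs. reflexivity. Qed.

Theorem riesz (f : H -> Defs.C) M : clinear f -> 0 <= M -> (forall x, cn2 (f x) <= M * ns x) ->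
  exists w, forall z, f z = inner z w.
Proof.
  intros Lf HM Bf.
  destruct (classic (forall z, f z = Defs.C0)) as [Z|NZ].
  { exists hzero. intro z. rewrite Z, inner_0r. reflexivity. }
  apply not_all_ex_not in NZ. destruct NZ as [z0 Hz0].
  set (N := fun n => f n = Defs.C0).
  set (E := fun r => exists n, N n /\ r = - ns (hs z0 n)).
  assert (Eb : bound E). { exists 0. intros r [n [_ ->]]. pose proof (ns_nonneg (hs z0 n)). lra. }
  assert (Ene : exists r, E r). { exists (- ns (hs z0 hzero)). exists hzero. split; auto. apply clin_zero; auto. }
  destruct (completeness E Eb Ene) as [m [Hub Hlub]].
  set (d := - m).
  assert (Dlow : forall n, N n -> d <= ns (hs z0 n)).
  { intros n Hn. unfold d. assert (m >= - ns (hs z0 n)). { apply Rle_ge, Hub. exists n; auto. } lra. }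
  assert (Dmin : forall j : nat, exists n, N n /\ ns (hs z0 n) < d + / INR (S j)).
  { intro j. apply NNPP. intro C. assert (Hub' : is_upper_bound E (m - / INR (S j))).
    { intros r [n [Hn ->]]. apply Rnot_lt_le. intro Hc. apply C. exists n. split; auto. unfold d. lra. }
    specialize (Hlub _ Hub'). pose proof (invS_pos j). lra. }
  apply fchoice in Dmin. destruct Dmin as [u Hnseq].
  assert (Nmid : forall a b, N a -> N b -> N (hscal (/2, 0) (hadd a b))).
  { intros a b Ha Hb. unfold N in *. rewrite (proj2 Lf), (proj1 Lf), Ha, Hb. csimpl. apply Cext; ring. }
  assert (Hd0 : 0 <= d). { assert (m <= 0). { apply Hlub. intros r [n [_ ->]]. pose proof (ns_nonneg (hs z0 n)). lra. } unfold d; lra. }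
  assert (Hcau : forall i j, ns (hs (u i) (u j)) <= 2 * / INR (S i) + 2 * / INR (S j)).
  { intros i j. destruct (Hnseq i) as [Ni Hi]. destruct (Hnseq j) as [Nj Hj].
    pose proof (parallelogram (hs z0 (u j)) (hs z0 (u i))) as Par.
    rewrite L2, <- (L3 z0 (hadd (u j) (u i))), ns_scal2, L1 in Par.
    pose proof (Dlow _ (Nmid _ _ Nj Ni)). lra. }
  assert (Hc : exists l, hconv H u l).
  { apply hcomplete. intros eps He. destruct (small_invS (eps*eps/4)) as [J HJ]. nra.
    exists J. intros n m' Hn Hm. change (hn (hs (u n) (u m')) < eps). apply ns_lt_hn. lra.
    specialize (Hcau n m'). pose proof (HJ n Hn). pose proof (HJ m' Hm). lra. }
  destruct Hc as [l Hl].
  assert (Nl : N l).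
  { unfold N. apply cn2_eq0. apply small_zero. apply cn2_nonneg. intros del Hdel.
    assert (Hk : 0 < del / (M + 1)) by (apply Rdiv_lt_0_compat; lra).
    destruct (Hl (sqrt (del / (M+1)))) as [J HJ]. apply sqrt_lt_R0; lra.
    specialize (HJ J (le_n J)). destruct (Hnseq J) as [NJ _].
    assert (E1 : f l = f (hs l (u J))). { rewrite clin_sub, NJ by auto. destruct (f l). csimpl. apply Cext; ring. }
    rewrite E1. eapply Rle_trans; [apply Bf|]. rewrite <- hnorm_sq, hsub_comm_norm.
    pose proof (hnorm_nonneg (hs (u J) l)). pose proof (sqrt_pos (del / (M+1))).
    assert (hn (hs (u J) l) * hn (hs (u J) l) <= del / (M+1)).
    { rewrite <- (sqrt_sqrt (del / (M+1))) by lra. nra. }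
    apply Rle_trans with (M * (del / (M+1))). nra. apply Rle_trans with ((M+1) * (del / (M+1))). nra.
    right. field. lra. }
  set (e := hs z0 l).
  assert (He_min : ns e <= d).
  { apply (le_of_small _ _ (2 * sqrt (d + 1) + 2)). pose proof (sqrt_pos (d+1)); lra.
    intros del [Hdel1 Hdel2].
    destruct (Hl del Hdel1) as [J1 HJ1]. destruct (small_invS del Hdel1) as [J2 HJ2].
    set (j := max J1 J2). specialize (HJ1 j ltac:(lia)). specialize (HJ2 j ltac:(lia)).
    destruct (Hnseq j) as [_ Hj].
    pose proof (hnorm_triangle (hs z0 (u j)) (hs (u j) l)) as T. rewrite <- hsub_sub in T. fold e in T.
    set (a := hn (hs z0 (u j))) in *. set (b := hn (hs (u j) l)) in *.
    assert (Ha2 : a * a < d + del) by (unfold a; rewrite hnorm_sq; lra).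
    assert (Ha : a <= sqrt (d + 1)). { apply le_sq_le. apply sqrt_pos. rewrite sqrt_sqrt by lra. lra. }
    assert (0 <= a) by apply hnorm_nonneg. assert (0 <= b) by apply hnorm_nonneg.
    pose proof (hnorm_nonneg e). rewrite <- hnorm_sq.
    apply Rle_trans with ((a + b) * (a + b)). nra. nra. }
  assert (Horth : forall n, N n -> inner e n = Defs.C0).
  { intros n Nn. destruct (inner e n) as [p q] eqn:Ec.
    set (s := / (ns n + 1)). pose proof (ns_nonneg n).
    assert (Hs : 0 < s) by (apply Rinv_0_lt_compat; lra).
    assert (Hsn : s * ns n < 1). { unfold s. apply (Rmult_lt_reg_l (ns n + 1)). lra. field_simplify; lra. }
    set (t := (s * p, s * q)).
    assert (Nt : N (hadd l (hscal t n))). { unfold N in *. rewrite (proj1 Lf), (proj2 Lf), Nl, Nn. csimpl. apply Cext; ring. }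
    pose proof (Dlow _ Nt) as D2.
    assert (Eq : hs z0 (hadd l (hscal t n)) = hs e (hscal t n)).
    { unfold e. apply (hadd_cancel (hadd l (hscal t n)) (hs z0 (hadd l (hscal t n)))). rewrite hadd_sub.
      rewrite <- (hadd_sub z0 l) at 1. rewrite <- hadd_assoc. f_equal. rewrite hadd_sub. reflexivity. }
    rewrite Eq, ns_sub, ns_scal, inner_scal_r, Ec in D2. unfold t in D2. csimpl_all.
    assert (Hpq : (p*p + q*q) * (s * (s * ns n) - 2 * s) >= 0).
    { apply Rle_ge. nra. }
    assert (s * (s * ns n) - 2 * s < 0) by nra.
    assert (p * p + q * q = 0) by nra. apply Cext; nra. }
  assert (Nsub : forall a b, N a -> N b -> N (hs a b)). { intros a b Ha Hb. unfold N in *. rewrite clin_sub, Ha, Hb by auto. csimpl. apply Cext; ring. }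
  assert (Fe : f e = f z0). { unfold e. rewrite clin_sub, Nl by auto. csimpl. destruct (f z0); apply Cext; simpl; ring. }
  assert (Nse : ns e <> 0).
  { intro Z. apply ns_eq0 in Z. apply Hz0. rewrite <- Fe, Z. apply clin_zero; auto. }
  destruct (f z0) as [fa fb] eqn:Ef.
  assert (Hfn : fa * fa + fb * fb <> 0).
  { intro Z. apply Hz0. unfold Defs.C0. apply Cext; nra. }
  exists (hscal ((fa / ns e), (- fb / ns e)) e).
  intro z. destruct (f z) as [za zb] eqn:Ez.
  set (al := ((za * fa + zb * fb) / (fa * fa + fb * fb), (zb * fa - za * fb) / (fa * fa + fb * fb))).
  assert (Nz : N (hs z (hscal al e))).
  { unfold N. rewrite clin_sub, (proj2 Lf), Fe, Ez by auto. unfold al. csimpl. apply Cext; field; auto. }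
  pose proof (Horth _ Nz) as O. rewrite inner_sym, inner_sub_l, inner_scal, inner_self in O.
  rewrite inner_scal_r. destruct (inner z e) as [ia ib] eqn:Ei. unfold al in O. csimpl.
  injection O; intros O2 O1.
  assert (Ha : ia = (za * fa + zb * fb) / (fa * fa + fb * fb) * ns e).
  { nra. }
  assert (Hb : ib = (zb * fa - za * fb) / (fa * fa + fb * fb) * ns e). { nra. }
  rewrite Ha, Hb. apply Cext; field; split; auto.
Qed.
End Riesz.

Lemma strict_mono_ge (phi : nat -> nat) : (forall k, (phi k < phi (S k))%nat) -> forall k, (k <= phi k)%nat.
Proof. intros Hp k. induction k; [lia|]. specialize (Hp k). lia. Qed.

Lemma nat_large (r : R) : exists N : nat, forall k, (k >= N)%nat -> r < INR k.
Proof.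
  destruct (archimed r) as [Hu _]. destruct (Z_lt_le_dec (up r) 0).
  - exists 0%nat. intros k _. pose proof (pos_INR k). apply IZR_lt in l. simpl in l. lra.
  - exists (Z.to_nat (up r)). intros k Hk. apply le_INR in Hk. rewrite INR_IZR_INZ, Z2Nat.id in Hk by auto. lra.
Qed.

Section Adj.
Context {H : Hilbert}.
Implicit Types x y z : H.
Notation hn := (hnorm H).
Notation hs := (hsub H).

Lemma inner_ext_r w1 w2 : (forall z, inner z w1 = inner z w2) -> w1 = w2.
Proof.
  intro E. apply hsub_eq0, ns_eq0. unfold ns. rewrite inner_sub_r, E.
  destruct (inner (hs w1 w2) w2). csimpl. ring.
Qed.

Lemma inner_ext_l w1 w2 : (forall z, inner w1 z = inner w2 z) -> w1 = w2.
Proof.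
  intro E. apply inner_ext_r. intro z. rewrite (inner_sym w1), (inner_sym w2), E. reflexivity.
Qed.

Lemma fst_inner_le x y : fst (inner x y) <= hn x * hn y.
Proof. eapply Rle_trans; [apply fst_le_cmod|apply cmod_inner]. Qed.

Lemma cn2_inner_le x y : cn2 (inner x y) <= ns x * ns y.
Proof. apply CS2. Qed.

Lemma bounded_adjoint (K : op H) M : is_linear K -> 0 <= M -> opnorm_le K M ->
  exists Ks : op H, is_adjoint K Ks /\ is_linear Ks /\ opnorm_le Ks M.
Proof.
  intros L HM B.
  assert (Ex : forall y, exists w, forall z, inner (K z) y = inner z w).
  { intro y. apply (riesz (fun z => inner (K z) y) (M * M * ns y)).
    - split; intros; [rewrite (proj1 L), inner_add | rewrite (proj2 L), inner_scal]; reflexivity.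
    - pose proof (ns_nonneg y). nra.
    - intro z. eapply Rle_trans; [apply CS2|]. pose proof (B z). pose proof (hnorm_nonneg (K z)).
      pose proof (hnorm_nonneg z). pose proof (ns_nonneg y). rewrite <- !hnorm_sq.
      assert (hn (K z) * hn (K z) <= M * M * (hn z * hn z)) by nra. nra. }
  apply fchoice in Ex. destruct Ex as [Ks HKs].
  assert (Adj : is_adjoint K Ks) by (intros x y; apply HKs).
  exists Ks. split; [exact Adj|split].
  - split.
    + intros x y. apply inner_ext_r. intro z. rewrite <- HKs, inner_add_r, inner_add_r, <- !HKs. reflexivity.
    + intros a x. apply inner_ext_r. intro z. rewrite <- HKs, !inner_scal_r, <- HKs. reflexivity.
  - intro y. pose proof (hnorm_nonneg (Ks y)). pose proof (hnorm_nonneg y).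
    assert (E : hn (Ks y) * hn (Ks y) <= M * hn (Ks y) * hn y).
    { rewrite hnorm_sq. unfold ns. rewrite <- HKs. eapply Rle_trans; [apply fst_inner_le|].
      pose proof (B (Ks y)). nra. }
    destruct (Req_dec (hn (Ks y)) 0) as [Z|NZ].
    + rewrite Z. nra.
    + assert (0 < hn (Ks y)) by lra. nra.
Qed.

Lemma compact_bounded (K : op H) : Defs.compact K -> exists M, 0 <= M /\ opnorm_le K M.
Proof.
  intros [L Cp]. apply NNPP. intro NB.
  assert (Ex : forall j : nat, exists x, hn x = 1 /\ INR j < hn (K x)).
  { intro j. apply NNPP. intro C. apply NB. exists (INR j). split. apply pos_INR.
    intro x. destruct (Req_dec (hn x) 0) as [Z|NZ].
    - apply hnorm_eq0 in Z. subst. rewrite lin_zero, hnorm_zero by auto. lra.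
    - pose proof (hnorm_nonneg x). set (c := / hn x).
      assert (Hc : 0 < c) by (apply Rinv_0_lt_compat; lra).
      apply Rnot_lt_le. intro Hlt. apply C. exists (hscal (c, 0) x). split.
      + rewrite hnorm_scal_real, Rabs_right by lra. unfold c. field. auto.
      + rewrite (proj2 L), hnorm_scal_real, Rabs_right by lra.
        apply (Rmult_lt_reg_l (hn x)). lra. unfold c. field_simplify; auto. lra. }
  apply fchoice in Ex. destruct Ex as [u Hu].
  destruct (Cp u) as [phi [Hphi [y Hy]]]. { exists 1. intro k. rewrite (proj1 (Hu k)). lra. }
  destruct (Hy 1 ltac:(lra)) as [N1 HN1].
  destruct (nat_large (hn y + 1)) as [N2 HN2].
  set (k := max N1 N2). specialize (HN1 k ltac:(lia)). specialize (HN2 k ltac:(lia)).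
  pose proof (proj2 (Hu (phi k))). pose proof (strict_mono_ge _ Hphi k). apply le_INR in H1.
  pose proof (hnorm_triangle y (hs (K (u (phi k))) y)). rewrite hadd_sub in H2. lra.
Qed.

End Adj.

Section Adj2.
Context {H : Hilbert}.
Notation hn := (hnorm H).
Notation hs := (hsub H).

Lemma adjoint_props (T S : op H) M : is_adjoint T S -> 0 <= M -> opnorm_le T M -> is_linear S /\ opnorm_le S M.
Proof.
  intros Adj HM B. split.
  - split.
    + intros x y. apply inner_ext_r. intro z. rewrite <- Adj, !inner_add_r, <- !Adj. reflexivity.
    + intros a x. apply inner_ext_r. intro z. rewrite <- Adj, !inner_scal_r, <- Adj. reflexivity.
  - intro y. pose proof (hnorm_nonneg (S y)). pose proof (hnorm_nonneg y).
    assert (E : hn (S y) * hn (S y) <= M * hn (S y) * hn y).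
    { rewrite hnorm_sq. unfold ns. rewrite <- Adj. eapply Rle_trans; [apply fst_inner_le|].
      pose proof (B (S y)). nra. }
    destruct (Req_dec (hn (S y)) 0) as [Z|NZ].
    + rewrite Z. nra.
    + assert (0 < hn (S y)) by lra. nra.
Qed.

Lemma Cconj_conj (c : Defs.C) : Cconj (Cconj c) = c.
Proof. destruct c; csimpl; apply Cext; ring. Qed.

End Adj2.

Section Filt.
Context {H : Hilbert}.
Variable P : nat -> op H.
Hypothesis HP : filtration P.
Notation hn := (hnorm H).
Notation hs := (hsub H).

Lemma Pproj n : orth_proj (P n).
Proof. apply (proj1 HP n). Qed.
Lemma Plin n : is_linear (P n).
Proof. apply proj_lin, Pproj. Qed.

Lemma hconv_P (w : nat -> H) w0 : hconv H w w0 -> hconv H (fun n => P n (w n)) w0.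
Proof.
  intros Hw eps He. destruct (Hw (eps/2)) as [N1 H1]; [lra|]. destruct (proj2 HP w0 (eps/2)) as [N2 H2]; [lra|].
  exists (max N1 N2). intros n Hn. specialize (H1 n ltac:(lia)). specialize (H2 n ltac:(lia)).
  rewrite (hsub_sub _ (P n w0)), <- lin_sub by apply Plin.
  eapply Rle_lt_trans; [apply hnorm_triangle|]. pose proof (proj_contr (P n) (hs (w n) w0) (Pproj n)). lra.
Qed.

Definition inFb (A : opseq H) := inF P A /\ exists M, 0 <= M /\ forall n, opnorm_le (A n) M.

Lemma AP_eq (A : opseq H) n x : (forall x, A n x = P n (A n (P n x))) -> A n (P n x) = A n x.
Proof. intro F. rewrite (F (P n x)), (proj_idem (P n) x (Pproj n)), <- (F x). reflexivity. Qed.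

Lemma PA_eq (A : opseq H) n x : (forall x, A n x = P n (A n (P n x))) -> P n (A n x) = A n x.
Proof. intro F. rewrite (F x), proj_idem by apply Pproj. reflexivity. Qed.

Lemma inFb_zero : inFb (seq_zero H).
Proof.
  split; [split; [|split]|].
  - intro n. split. split; intros; unfold seq_zero; [rewrite hadd_zero|rewrite hscal_hzero]; reflexivity.
    intro x. unfold seq_zero. rewrite lin_zero by apply Plin. reflexivity.
  - intro x. exists hzero. apply (hconv_ev_zero _ 0). intros; reflexivity.
  - exists (seq_zero H). split. intros n x y. unfold seq_zero. rewrite inner_0l, inner_0r. reflexivity.
    intro x. exists hzero. apply (hconv_ev_zero _ 0). intros; reflexivity.
  - exists 0. split. lra. intros n x. unfold seq_zero. rewrite hnorm_zero. pose proof (hnorm_nonneg x). lra.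
Qed.

Lemma inFb_add A B : inFb A -> inFb B -> inFb (seq_add A B).
Proof.
  intros [[FA [SA [Sa [Ad Sas]]]] [MA [HMA BA]]] [[FB [SB [Sb [Bd Sbs]]]] [MB [HMB BB]]].
  split; [split; [|split]|].
  - intro n. destruct (FA n) as [LA EA], (FB n) as [LB EB]. split.
    + unfold seq_add. split.
      * intros x y. rewrite (proj1 LA), (proj1 LB), <- !hadd_assoc. f_equal. rewrite !hadd_assoc. f_equal. apply hadd_comm.
      * intros a x. rewrite (proj2 LA), (proj2 LB), hscal_addv. reflexivity.
    + intro x. unfold seq_add. rewrite (proj1 (Plin n)), !AP_eq, !PA_eq by auto. reflexivity.
  - intro x. destruct (SA x) as [ya Ha], (SB x) as [yb Hb]. exists (hadd ya yb). apply (hconv_add Ha Hb).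
  - exists (fun n y => hadd (Sa n y) (Sb n y)). split.
    + intros n x y. unfold seq_add. rewrite inner_add, inner_add_r, Ad, Bd. reflexivity.
    + intro x. destruct (Sas x) as [ya Ha], (Sbs x) as [yb Hb]. exists (hadd ya yb). apply (hconv_add Ha Hb).
  - exists (MA + MB). split. lra. intros n x. unfold seq_add. eapply Rle_trans; [apply hnorm_triangle|].
    pose proof (BA n x). pose proof (BB n x). lra.
Qed.

Lemma inFb_scal c A : inFb A -> inFb (seq_scal c A).
Proof.
  intros [[FA [SA [Sa [Ad Sas]]]] [MA [HMA BA]]].
  split; [split; [|split]|].
  - intro n. destruct (FA n) as [LA EA]. split.
    + unfold seq_scal. split.
      * intros x y. rewrite (proj1 LA), hscal_addv. reflexivity.
      * intros a x. rewrite (proj2 LA), !hscal_mul. f_equal. destruct a, c; csimpl; apply Cext; ring.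
    + intro x. unfold seq_scal. rewrite (proj2 (Plin n)), !AP_eq, !PA_eq by auto. reflexivity.
  - intro x. destruct (SA x) as [ya Ha]. exists (hscal c ya). apply (hconv_scal c Ha).
  - exists (fun n y => hscal (Cconj c) (Sa n y)). split.
    + intros n x y. unfold seq_scal. rewrite inner_scal, inner_scal_r, Ad, Cconj_conj. reflexivity.
    + intro x. destruct (Sas x) as [ya Ha]. exists (hscal (Cconj c) ya). apply (hconv_scal _ Ha).
  - exists (sqrt (cn2 c) * MA). split. pose proof (sqrt_pos (cn2 c)); nra. intros n x. unfold seq_scal.
    rewrite hnorm_scal. pose proof (BA n x). pose proof (sqrt_pos (cn2 c)). nra.
Qed.

Lemma inFb_mul A B : inFb A -> inFb B -> inFb (seq_mul A B).
Proof.
  intros [[FA [SA [Sa [Ad Sas]]]] [MA [HMA BA]]] [[FB [SB [Sb [Bd Sbs]]]] [MB [HMB BB]]].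
  assert (BP : forall n, opnorm_le (fun x => B n (P n x)) MB).
  { intros n x. rewrite AP_eq by apply FB. apply BB. }
  assert (AP : forall n, opnorm_le (fun x => A n (P n x)) MA).
  { intros n x. rewrite AP_eq by apply FA. apply BA. }
  assert (Sbp : forall n, is_linear (Sb n) /\ opnorm_le (Sb n) MB).
  { intro n. apply (adjoint_props _ _ _ (Bd n) HMB (BP n)). }
  split; [split; [|split]|].
  - intro n. destruct (FA n) as [LA EA], (FB n) as [LB EB]. split.
    + unfold seq_mul. split.
      * intros x y. rewrite (proj1 LB), (proj1 LA). reflexivity.
      * intros a x. rewrite (proj2 LB), (proj2 LA). reflexivity.
    + intro x. unfold seq_mul. rewrite PA_eq by auto. rewrite (AP_eq B n x) by auto. reflexivity.
  - intro x. destruct (SB x) as [yb Hb]. destruct (SA yb) as [ya Ha]. exists ya. unfold seq_mul.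
    intros eps He. destruct (Ha (eps/2)) as [N1 H1]; [lra|].
    destruct (Hb (eps / (2 * (MA + 1)))) as [N2 H2]. apply Rdiv_lt_0_compat; lra.
    exists (max N1 N2). intros n Hn. specialize (H1 n ltac:(lia)). specialize (H2 n ltac:(lia)).
    rewrite (hsub_sub _ (A n (P n yb))). eapply Rle_lt_trans; [apply hnorm_triangle|].
    rewrite (AP_eq A n yb), <- lin_sub by apply FA.
    pose proof (BA n (hs (B n (P n x)) yb)). pose proof (hnorm_nonneg (hs (B n (P n x)) yb)).
    assert (MA * hn (hs (B n (P n x)) yb) <= eps / 2).
    { apply Rle_trans with ((MA + 1) * (eps / (2 * (MA + 1)))). nra. right. field. lra. }
    rewrite (AP_eq A n yb) in H1 by apply FA. lra.
  - exists (fun n y => Sb n (Sa n y)). split.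
    + intros n x y. unfold seq_mul. rewrite <- (AP_eq A n) by apply FA. rewrite Ad, Bd. reflexivity.
    + intro y. destruct (Sas y) as [ya Ha]. destruct (Sbs ya) as [yb Hb]. exists yb.
      intros eps He. destruct (Hb (eps/2)) as [N1 H1]; [lra|].
      destruct (Ha (eps / (2 * (MB + 1)))) as [N2 H2]. apply Rdiv_lt_0_compat; lra.
      exists (max N1 N2). intros n Hn. specialize (H1 n ltac:(lia)). specialize (H2 n ltac:(lia)).
      rewrite (hsub_sub _ (Sb n ya)). eapply Rle_lt_trans; [apply hnorm_triangle|].
      rewrite <- lin_sub by apply Sbp.
      pose proof (proj2 (Sbp n) (hs (Sa n y) ya)). pose proof (hnorm_nonneg (hs (Sa n y) ya)).
      assert (MB * hn (hs (Sa n y) ya) <= eps / 2).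
      { apply Rle_trans with ((MB + 1) * (eps / (2 * (MB + 1)))). nra. right. field. lra. }
      lra.
  - exists (MA * MB). split. nra. intros n x. unfold seq_mul.
    pose proof (BA n (B n x)). pose proof (BB n x). pose proof (hnorm_nonneg x). nra.
Qed.

Definition gen (K : op H) : opseq H := fun n x => P n (K (P n x)).

Lemma inFb_gen K : Defs.compact K -> inFb (gen K).
Proof.
  intro CK. destruct (compact_bounded _ CK) as [M [HM BK]]. pose proof (proj1 CK) as LK.
  destruct (bounded_adjoint _ _ LK HM BK) as [Ks [Adj [LKs BKs]]].
  split; [split; [|split]|].
  - intro n. split.
    + unfold gen. split.
      * intros x y. rewrite (proj1 (Plin n)), (proj1 LK), (proj1 (Plin n)). reflexivity.
      * intros a x. rewrite (proj2 (Plin n)), (proj2 LK), (proj2 (Plin n)). reflexivity.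
    + intro x. unfold gen. rewrite !proj_idem by apply Pproj. reflexivity.
  - intro x. exists (K x). unfold gen. apply hconv_P. simpl.
    apply (hconv_ext (fun n => K (P n x))). intro n. rewrite proj_idem by apply Pproj. reflexivity.
    apply (hconv_bounded_op LK BK). apply (proj2 HP).
  - exists (fun n y => P n (Ks (P n y))). split.
    + intros n x y. unfold gen. rewrite (proj_idem (P n) x (Pproj n)), (proj_adj (P n) _ y (Pproj n)), Adj, (proj_adj (P n) x _ (Pproj n)). reflexivity.
    + intro y. exists (Ks y). apply hconv_P. apply (hconv_bounded_op LKs BKs). apply (proj2 HP).
  - exists M. split; auto. intros n x. unfold gen.
    eapply Rle_trans; [apply proj_contr, Pproj|]. eapply Rle_trans; [apply BK|].
    pose proof (proj_contr (P n) x (Pproj n)). nra.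
Qed.

End Filt.

Section OnlyIf.
Context {H : Hilbert}.
Variable P : nat -> op H.
Hypothesis HP : filtration P.
Notation hn := (hnorm H).
Notation hs := (hsub H).

Lemma zero_op_le (x : H) eps : eps > 0 -> hn hzero <= eps * hn x.
Proof. intro. rewrite hnorm_zero. pose proof (hnorm_nonneg x). nra. Qed.

Lemma inFb_limit (A : opseq H) : inF P A ->
  (forall eps, eps > 0 -> exists B, inFb P B /\ forall n, opnorm_le (seq_sub A B n) eps) -> inFb P A.
Proof.
  intros FA Hl. split; auto. destruct (Hl 1 ltac:(lra)) as [B [[_ [MB [HMB BB]]] HB]].
  exists (MB + 1). split. lra. intros n x. rewrite <- (hadd_sub (A n x) (B n x)).
  eapply Rle_trans; [apply hnorm_triangle|]. pose proof (BB n x). pose proof (HB n x). unfold seq_sub in *. lra.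
Qed.

Lemma only_if : (forall n, exists x : H, P n x <> hzero) ->
  (forall A : opseq H, inG P A -> inJ P A) -> injective_filtration P.
Proof.
  intros Hnz HG n0 m0 Hnm. apply NNPP. intro Hne.
  assert (Eq : forall x, P n0 x = P m0 x).
  { intro x. apply NNPP. intro C. apply Hne. exists x. auto. }
  set (D := fun n x => if Nat.eq_dec n n0 then P n x else @hzero H).
  assert (HD : inG P D).
  { split; [split; [|split]|].
    - intro n. unfold D. destruct (Nat.eq_dec n n0).
      + split. apply Plin; auto. intro x. rewrite !proj_idem by (apply Pproj; auto). reflexivity.
      + split. split; intros; [rewrite hadd_zero|rewrite hscal_hzero]; reflexivity.
        intro x. rewrite lin_zero by (apply Plin; auto). reflexivity.
    - intro x. exists hzero. apply (hconv_ev_zero _ (S n0)). intros n Hn. unfold D.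
      destruct (Nat.eq_dec n n0); [lia|reflexivity].
    - exists D. split.
      + intros n x y. unfold D. destruct (Nat.eq_dec n n0).
        * rewrite proj_idem, proj_adj by (apply Pproj; auto). reflexivity.
        * rewrite inner_0l, inner_0r. reflexivity.
      + intro x. exists hzero. apply (hconv_ev_zero _ (S n0)). intros n Hn. unfold D.
        destruct (Nat.eq_dec n n0); [lia|reflexivity].
    - intros eps He. exists (S n0). intros n Hn x. unfold D. destruct (Nat.eq_dec n n0); [lia|].
      apply zero_op_le; auto. }
  set (S := fun B : opseq H => inFb P B /\ forall x, B n0 x = B m0 x).
  assert (CS : closed_subalg P S).
  { split; [|split; [|split; [|split; [|split]]]].
    - intros A [[F _] _]. exact F.
    - split. apply inFb_zero; auto. intro; reflexivity.
    - intros A B [FA EA] [FB EB]. split. apply inFb_add; auto. intro x. unfold seq_add. rewrite EA, EB. reflexivity.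
    - intros c A [FA EA]. split. apply inFb_scal; auto. intro x. unfold seq_scal. rewrite EA. reflexivity.
    - intros A B [FA EA] [FB EB]. split. apply inFb_mul; auto. intro x. unfold seq_mul. rewrite EB, EA. reflexivity.
    - intros A FA Hl. split.
      + apply inFb_limit; auto. intros eps He. destruct (Hl eps He) as [B [[FB _] HB]]. eauto.
      + intro x. apply hsub_eq0, zero_small_eq. intros eps He.
        set (del := eps / (2 * (hn x + 1))). pose proof (hnorm_nonneg x).
        assert (Hdel : del > 0) by (apply Rdiv_lt_0_compat; lra).
        destruct (Hl del Hdel) as [B [[_ EB] HB]].
        rewrite (hsub_sub (A n0 x) (B n0 x)).
        replace (hs (B n0 x) (A m0 x)) with (hs (B m0 x) (A m0 x)) by (rewrite EB; auto). eapply Rle_trans; [apply hnorm_triangle|].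
        rewrite (hsub_comm_norm (B m0 x)). pose proof (HB n0 x). pose proof (HB m0 x). unfold seq_sub in *.
        assert (del * hn x <= eps / 2). { apply Rle_trans with (del * (hn x + 1)). nra. unfold del. right. field. lra. }
        lra. }
  assert (Hgen : forall K, Defs.compact K -> S (fun n x => P n (K (P n x)))).
  { intros K CK. split. apply (inFb_gen P HP K CK). intro x. rewrite !Eq. reflexivity. }
  pose proof (HG D HD S CS Hgen) as [_ SD].
  destruct (Hnz n0) as [x Hx]. apply Hx. specialize (SD x). unfold D in SD.
  destruct (Nat.eq_dec n0 n0); [|lia]. destruct (Nat.eq_dec m0 n0); [lia|]. exact SD.
Qed.

End OnlyIf.

Lemma bw_sub (u : nat -> R) M : (forall n, Rabs (u n) <= M) ->
  exists phi : nat -> nat, (forall k, (phi k < phi (S k))%nat) /\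
    exists l, forall eps, eps > 0 -> exists N, forall j, (j >= N)%nat -> Rabs (u (phi j) - l) < eps.
Proof.
  intro Hb.
  destruct (Bolzano_Weierstrass u (fun c => -M <= c <= M) (compact_P3 (-M) M)) as [l Hl].
  { intro n. specialize (Hb n). unfold Rabs in Hb. destruct (Rcase_abs (u n)); lra. }
  assert (Ex : forall Nj : nat * nat, exists p, (fst Nj <= p)%nat /\ Rabs (u p - l) < / INR (S (snd Nj))).
  { intros [N j]. simpl. set (del := mkposreal _ (invS_pos j)).
    destruct (Hl (disc l del) N) as [p [Hp Hd]].
    { exists del. intros y Hy; exact Hy. }
    exists p. split; auto. }
  apply fchoice in Ex. destruct Ex as [g Hg].
  set (phi := fix phi (j : nat) : nat := match j with O => g (0%nat, 0%nat) | S j' => g (S (phi j'), S j') end).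
  exists phi. split.
  - intro k. simpl. destruct (Hg (S (phi k), S k)) as [H1 _]. simpl in H1. lia.
  - exists l. intros eps He. destruct (small_invS eps He) as [J HJ]. exists J. intros j Hj.
    eapply Rlt_trans; [|apply (HJ j Hj)].
    destruct j; simpl.
    + exact (proj2 (Hg (0%nat, 0%nat))).
    + exact (proj2 (Hg (S (phi j), S j))).
Qed.

Lemma Rabs_fst_le (w : Defs.C) : Rabs (fst w) <= sqrt (cn2 w).
Proof. rewrite <- sqrt_Rsqr_abs. apply sqrt_le_1_alt. unfold Rsqr, cn2. nra. Qed.
Lemma Rabs_snd_le (w : Defs.C) : Rabs (snd w) <= sqrt (cn2 w).
Proof. rewrite <- sqrt_Rsqr_abs. apply sqrt_le_1_alt. unfold Rsqr, cn2. nra. Qed.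

Lemma sqrt_cn2_le (w : Defs.C) : sqrt (cn2 w) <= Rabs (fst w) + Rabs (snd w).
Proof.
  apply le_sq_le. pose proof (Rabs_pos (fst w)); pose proof (Rabs_pos (snd w)); lra.
  rewrite sqrt_sqrt by apply cn2_nonneg. unfold cn2.
  assert (E1 : fst w * fst w = Rabs (fst w) * Rabs (fst w)) by (rewrite <- Rabs_mult, Rabs_right; nra).
  assert (E2 : snd w * snd w = Rabs (snd w) * Rabs (snd w)) by (rewrite <- Rabs_mult, Rabs_right; nra).
  rewrite E1, E2. pose proof (Rabs_pos (fst w)); pose proof (Rabs_pos (snd w)). nra.
Qed.

Lemma bw_complex (c : nat -> Defs.C) M : (forall n, sqrt (cn2 (c n)) <= M) ->
  exists phi : nat -> nat, (forall k, (phi k < phi (S k))%nat) /\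
    exists l : Defs.C, forall eps, eps > 0 -> exists N, forall j, (j >= N)%nat ->
      sqrt (cn2 (Cadd (c (phi j)) (Cmul (-1, 0) l))) < eps.
Proof.
  intro Hb.
  destruct (bw_sub (fun n => fst (c n)) M) as [p1 [Hp1 [l1 Hl1]]].
  { intro n. eapply Rle_trans; [apply Rabs_fst_le|apply Hb]. }
  destruct (bw_sub (fun n => snd (c (p1 n))) M) as [p2 [Hp2 [l2 Hl2]]].
  { intro n. eapply Rle_trans; [apply Rabs_snd_le|apply Hb]. }
  exists (fun j => p1 (p2 j)). split.
  - intro k. specialize (Hp2 k).
    assert (Mono : forall a b, (a < b)%nat -> (p1 a < p1 b)%nat).
    { intros a b Hab. induction Hab. apply Hp1. specialize (Hp1 m). lia. }
    apply Mono; auto.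
  - exists (l1, l2). intros eps He.
    destruct (Hl1 (eps/2)) as [N1 H1]; [lra|]. destruct (Hl2 (eps/2)) as [N2 H2]; [lra|].
    exists (max N1 N2). intros j Hj.
    pose proof (strict_mono_ge _ Hp2 j).
    specialize (H1 (p2 j) ltac:(lia)). specialize (H2 j ltac:(lia)). simpl in H1, H2.
    eapply Rle_lt_trans; [apply sqrt_cn2_le|]. csimpl.
    replace (fst (c (p1 (p2 j))) + (-1 * l1 - 0 * l2)) with (fst (c (p1 (p2 j))) - l1) by ring.
    replace (snd (c (p1 (p2 j))) + (-1 * l2 + 0 * l1)) with (snd (c (p1 (p2 j))) - l2) by ring.
    lra.
Qed.

Section Rank1.
Context {H : Hilbert}.
Notation hn := (hnorm H).
Notation hs := (hsub H).

Definition rk (w v : H) : op H := fun x => hscal (inner x v) w.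

Lemma rk_lin w v : is_linear (rk w v).
Proof.
  unfold rk. split.
  - intros x y. rewrite inner_add, hscal_adds. reflexivity.
  - intros a x. rewrite inner_scal, hscal_mul. reflexivity.
Qed.

Lemma hs_scal_l (a b : Defs.C) (w : H) : hs (hscal a w) (hscal b w) = hscal (Cadd a (Cmul (-1,0) b)) w.
Proof. unfold hsub. rewrite hopp_scal, hscal_mul, hscal_adds. reflexivity. Qed.

Lemma rk_compact w v : Defs.compact (rk w v).
Proof.
  split. apply rk_lin. intros u [M HM].
  destruct (bw_complex (fun k => inner (u k) v) (M * hn v)) as [phi [Hphi [l Hl]]].
  { intro n. eapply Rle_trans; [apply cmod_inner|]. pose proof (hnorm_nonneg v). specialize (HM n). nra. }
  exists phi. split; auto. exists (hscal l w).
  intros eps He. destruct (Hl (eps / (hn w + 1))) as [N HN]. apply Rdiv_lt_0_compat; pose proof (hnorm_nonneg w); lra.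
  exists N. intros j Hj. unfold rk. rewrite hs_scal_l, hnorm_scal. specialize (HN j Hj).
  pose proof (hnorm_nonneg w). pose proof (sqrt_pos (cn2 (Cadd (inner (u (phi j)) v) (Cmul (-1, 0) l)))).
  apply Rle_lt_trans with (eps / (hn w + 1) * hn w). nra.
  apply Rlt_le_trans with (eps / (hn w + 1) * (hn w + 1)). assert (0 < eps / (hn w + 1)) by (apply Rdiv_lt_0_compat; lra). nra.
  right. field. lra.
Qed.

End Rank1.

Section GS.
Context {H : Hilbert}.
Notation hn := (hnorm H).
Notation hs := (hsub H).
Implicit Types x y z w : H.

Lemma hadd4 (a b c d : H) : hadd (hadd a b) (hadd c d) = hadd (hadd a c) (hadd b d).
Proof.
  rewrite <- !hadd_assoc. f_equal. rewrite !hadd_assoc. f_equal. apply hadd_comm.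
Qed.

Definition sumR (ps : list (H * H)) (x : H) : H :=
  fold_right (fun p acc => hadd (hscal (inner x (snd p)) (fst p)) acc) hzero ps.

Lemma sumR_lin ps : is_linear (sumR ps).
Proof.
  induction ps as [|[u v] ps IH]; unfold sumR in *; simpl in *; split.
  - intros; rewrite hadd_zero; reflexivity.
  - intros; rewrite hscal_hzero; reflexivity.
  - intros x y. rewrite (proj1 IH), inner_add, hscal_adds, hadd4. reflexivity.
  - intros a x. rewrite (proj2 IH), inner_scal, hscal_addv, hscal_mul. reflexivity.
Qed.

Definition GSinv (L : list H) (ps : list (H * H)) : Prop :=
  (forall x y, inner (sumR ps x) y = inner x (sumR ps y)) /\
  (forall x, sumR ps (sumR ps x) = sumR ps x) /\
  (forall y, In y L -> sumR ps y = y) /\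
  (forall T : op H, is_linear T -> (forall y, In y L -> T y = y) -> forall x, T (sumR ps x) = sumR ps x).

Lemma GS_exists L : exists ps, GSinv L ps.
Proof.
  induction L as [|w L IH].
  - exists nil. split; [|split; [|split]]; simpl.
    + intros. rewrite inner_0l, inner_0r. reflexivity.
    + reflexivity.
    + intros y [].
    + intros T LT _ x. apply lin_zero; auto.
  - destruct IH as [ps [P1 [P2 [P3 P4]]]].
    set (Q := sumR ps). pose proof (sumR_lin ps) as LQ. fold Q in LQ, P1, P2, P3, P4.
    set (w' := hs w (Q w)).
    assert (Qw' : Q w' = hzero). { unfold w'. rewrite lin_sub, P2 by auto. apply hsub_diag. }
    assert (Ow' : forall x, inner (Q x) w' = Defs.C0). { intro x. rewrite P1, Qw', inner_0r. reflexivity. }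
    destruct (classic (w' = hzero)) as [Z|NZ].
    + exists ps. fold Q. split; [|split; [|split]]; auto.
      * intros y [<-|Hy]; auto. apply eq_sym, hsub_eq0. exact Z.
      * intros T LT HT. apply P4; auto. intros y Hy. apply HT. right; auto.
    + set (n := ns w'). assert (Hn : n <> 0). { intro E. apply NZ, ns_eq0. exact E. }
      exists ((hscal (/n, 0) w', w') :: ps).
      assert (EQ : forall x, sumR ((hscal (/n, 0) w', w') :: ps) x = hadd (hscal (Cmul (inner x w') (/n, 0)) w') (Q x)).
      { intro x. simpl. rewrite hscal_mul. reflexivity. }
      assert (Iw : inner w w' = (n, 0)).
      { replace w with (hadd (Q w) w') at 1 by (unfold w'; apply hadd_sub). rewrite inner_add, Ow', inner_self.
        unfold n. csimpl. apply Cext; ring. }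
      split; [|split; [|split]]; intros; rewrite ?EQ.
      * rewrite inner_add, inner_add_r, inner_scal, inner_scal_r, P1. f_equal.
        rewrite (inner_sym y w'). destruct (inner x w'), (inner w' y). csimpl. apply Cext; ring.
      * rewrite inner_add, inner_scal, Ow', inner_self. fold n.
        rewrite (proj1 LQ), (proj2 LQ), Qw', hscal_hzero, hadd_0l, P2. f_equal. f_equal.
        destruct (inner x w'). csimpl. apply Cext; field; auto.
      * destruct H0 as [<-|Hy].
        -- rewrite Iw. replace (Cmul (n, 0) (/ n, 0)) with Defs.C1 by (csimpl; apply Cext; field; auto).
           rewrite hscal_one. rewrite hadd_comm. apply hadd_sub.
        -- rewrite P3 by auto. rewrite <- (P3 y Hy) at 1. rewrite Ow'. rewrite hscal_C0'. apply hadd_0l.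
           csimpl; ring. csimpl; ring.
      * rewrite (proj1 H0), (proj2 H0). rewrite P4; auto. f_equal. f_equal.
        unfold w'. rewrite lin_sub, P4, H1; auto. left; auto. intros y Hy. apply H1. right; auto.
        intros y Hy. apply H1. right; auto.
Qed.

Lemma proj_decomp (P : op H) : orth_proj P -> finite_rank P -> exists ps, forall x, P x = sumR ps x.
Proof.
  intros HP [vs Hvs]. destruct (GS_exists (map P vs)) as [ps [P1 [P2 [P3 P4]]]].
  exists ps. pose proof (sumR_lin ps) as LQ.
  assert (PQ : forall x, P (sumR ps x) = sumR ps x).
  { apply P4. apply proj_lin; auto. intros y Hy. apply in_map_iff in Hy. destruct Hy as [v [<- _]]. apply proj_idem; auto. }
  assert (QP : forall x, sumR ps (P x) = P x).
  { intro x. destruct (Hvs x) as [cs [_ E]]. rewrite <- (proj_idem P x HP), E.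
    rewrite !lin_lincomb by (auto; apply proj_lin; auto). f_equal. rewrite map_map.
    apply map_ext_in. intros v Hv. apply P3. apply in_map; auto. }
  intro x. apply inner_ext_l. intro y. rewrite <- (QP x), P1, (proj_adj P x _ HP), PQ, <- P1. reflexivity.
Qed.

End GS.

Section Sep.
Context {H : Hilbert}.
Notation hn := (hnorm H).
Notation hs := (hsub H).
Implicit Types x y z w : H.

Lemma ns_P_fst (P : op H) a : orth_proj P -> ns (P a) = fst (inner (P a) a).
Proof. intro HP. unfold ns. rewrite (proj_adj P a (P a) HP), (proj_idem P a HP), <- (proj_adj P a a HP). reflexivity. Qed.

Lemma fst_inner_swap_P (P : op H) x y : orth_proj P -> fst (inner (P y) x) = fst (inner (P x) y).
Proof. intro HP. rewrite (proj_adj P y x HP), inner_sym. destruct (inner (P x) y); reflexivity. Qed.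

Lemma polarization (P1 P2 : op H) : orth_proj P1 -> orth_proj P2 ->
  (forall a, ns (P1 a) = ns (P2 a)) -> forall x, P1 x = P2 x.
Proof.
  intros H1 H2 E x.
  set (phi := fun a b => fst (inner (P1 a) b) - fst (inner (P2 a) b)).
  assert (D : forall a, phi a a = 0). { intro a. unfold phi. rewrite <- !ns_P_fst by auto. rewrite E. ring. }
  assert (Sy : forall a b, phi a b = phi b a). { intros a b. unfold phi. rewrite !(fst_inner_swap_P _ a b) by auto. reflexivity. }
  assert (Ad : forall a b, phi (hadd a b) (hadd a b) = phi a a + phi b b + phi a b + phi b a).
  { intros a b. unfold phi. rewrite (proj1 (proj_lin _ H1)), (proj1 (proj_lin _ H2)), !inner_add, !inner_add_r.
    destruct (inner (P1 a) a), (inner (P1 a) b), (inner (P1 b) a), (inner (P1 b) b),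
      (inner (P2 a) a), (inner (P2 a) b), (inner (P2 b) a), (inner (P2 b) b). csimpl. ring. }
  assert (Z : forall a b, phi a b = 0). { intros a b. pose proof (Ad a b). rewrite !D, (Sy b a) in H0. lra. }
  apply hsub_eq0, ns_eq0. unfold ns. rewrite inner_sub_l. specialize (Z x (hs (P1 x) (P2 x))). unfold phi in Z.
  destruct (inner (P1 x) (hs (P1 x) (P2 x))), (inner (P2 x) (hs (P1 x) (P2 x))). csimpl. simpl in Z. lra.
Qed.

Lemma fst_Cadd (a b : Defs.C) : fst (Cadd a b) = fst a + fst b.
Proof. reflexivity. Qed.

Definition sumv (ps : list (H * H)) : R := fold_right (fun p acc => hn (snd p) + acc) 0 ps.

Lemma sumv_nonneg ps : 0 <= sumv ps.
Proof. induction ps; simpl. lra. pose proof (hnorm_nonneg (snd a)). lra. Qed.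

Lemma sqrt_cn2_mul (a b : Defs.C) : sqrt (cn2 (Cmul a b)) = sqrt (cn2 a) * sqrt (cn2 b).
Proof. rewrite cn2_mul, sqrt_mult_alt by apply cn2_nonneg. reflexivity. Qed.

Lemma sumR_inner_bound ps x y c : 0 <= c -> (forall p, In p ps -> sqrt (cn2 (inner (fst p) y)) <= c) ->
  fst (inner (sumR ps x) y) <= hn x * c * sumv ps.
Proof.
  intros Hc. induction ps as [|[u v] ps IH]; intros Hb; unfold sumR in *; simpl in *.
  - rewrite inner_0l. simpl. lra.
  - rewrite inner_add, inner_scal. simpl.
    assert (fst (Cmul (inner x v) (inner u y)) <= hn x * hn v * c).
    { eapply Rle_trans; [apply fst_le_cmod|]. rewrite sqrt_cn2_mul.
      pose proof (cmod_inner x v). pose proof (Hb (u, v) (or_introl eq_refl)). simpl in H1.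
      pose proof (sqrt_pos (cn2 (inner x v))). pose proof (sqrt_pos (cn2 (inner u y))).
      pose proof (hnorm_nonneg x). pose proof (hnorm_nonneg v). nra. }
    specialize (IH (fun p Hp => Hb p (or_intror Hp))). simpl in H0. nra.
Qed.

End Sep.

Section SepF.
Context {H : Hilbert}.
Variable P : nat -> op H.
Hypothesis HP : filtration P.
Notation hn := (hnorm H).
Notation hs := (hsub H).

Lemma uniform_conv (ps : list (H * H)) eps : eps > 0 ->
  exists N, forall m, (m >= N)%nat -> forall p, In p ps -> hn (hs (fst p) (P m (fst p))) < eps.
Proof.
  intro He. induction ps as [|p ps IH].
  - exists 0%nat. intros m _ p [].
  - destruct IH as [N1 H1]. destruct (proj2 HP (fst p) eps He) as [N2 H2].
    exists (max N1 N2). intros m Hm q [<-|Hq].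
    + rewrite hsub_comm_norm. apply H2. lia.
    + apply H1; auto. lia.
Qed.

Lemma fin_dim_eventually_id k : (forall a, P k a = a) -> exists N, forall m, (m >= N)%nat -> forall y, P m y = y.
Proof.
  intro Id. destruct (proj_decomp (P k) (proj1 (proj1 HP k)) (proj2 (proj1 HP k))) as [ps Hps].
  set (B := sumv ps). pose proof (sumv_nonneg ps) as HB. fold B in HB.
  destruct (uniform_conv ps (/ (2 * (B + 1)))) as [N HN]. apply Rlt_gt, Rinv_0_lt_compat; lra.
  exists N. intros m Hm y.
  set (z := hs y (P m y)).
  assert (Pz : P m z = hzero). { unfold z. rewrite lin_sub, proj_idem by (apply (proj1 HP m) || apply proj_lin, (proj1 HP m)). apply hsub_diag. }
  assert (Bd : fst (inner (sumR ps z) z) <= hn z * (/ (2 * (B + 1)) * hn z) * B).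
  { apply sumR_inner_bound. pose proof (hnorm_nonneg z). assert (0 < / (2 * (B + 1))) by (apply Rinv_0_lt_compat; lra). nra.
    intros p Hp. replace (inner (fst p) z) with (inner (hs (fst p) (P m (fst p))) z).
    - eapply Rle_trans; [apply cmod_inner|]. pose proof (HN m Hm p Hp). pose proof (hnorm_nonneg z). nra.
    - rewrite inner_sub_l, (proj_adj (P m) _ _ (proj1 (proj1 HP m))), Pz, inner_0r. csimpl. destruct (inner (fst p) z). apply Cext; simpl; ring. }
  rewrite <- Hps, Id in Bd. fold (ns z) in Bd. rewrite <- hnorm_sq in Bd.
  assert (E : hn z * hn z = 0).
  { pose proof (hnorm_nonneg z). assert (/ (2 * (B + 1)) * B <= 1/2).
    { apply Rle_trans with (/ (2 * (B + 1)) * (B + 1)). assert (0 < / (2 * (B + 1))) by (apply Rinv_0_lt_compat; lra). nra. right. field. lra. }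
    nra. }
  rewrite hnorm_sq in E. apply ns_eq0 in E. apply eq_sym, hsub_eq0. exact E.
Qed.

Lemma not_identity k : injective_filtration P -> exists a, ns (P k a) <> ns a.
Proof.
  intro Inj. apply NNPP. intro C.
  assert (Id : forall a, P k a = a).
  { intro a. assert (E : ns (P k a) = ns a). { apply NNPP. intro. apply C. exists a. auto. }
    pose proof (proj_ns (P k) a (proj1 (proj1 HP k))). apply eq_sym, hsub_eq0, ns_eq0. lra. }
  destruct (fin_dim_eventually_id k Id) as [N HN].
  destruct (Inj N (S N)) as [x Hx]. lia. apply Hx. rewrite (HN N), (HN (S N)) by lia. reflexivity.
Qed.

Lemma separate k m : injective_filtration P -> m <> k -> exists a, ns (P m a) <> ns (P k a).
Proof.
  intros Inj Hmk. apply NNPP. intro C. destruct (Inj m k Hmk) as [x Hx]. apply Hx.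
  apply polarization; try apply (proj1 HP). intro a. apply NNPP. intro. apply C. exists a. auto.
Qed.

End SepF.

Section Phi.
Context {H : Hilbert}.
Variable P : nat -> op H.
Hypothesis HP : filtration P.
Variable S : opseq H -> Prop.
Hypothesis CS : closed_subalg P S.
Hypothesis Gen : forall K, Defs.compact K -> S (fun n x => P n (K (P n x))).
Notation hn := (hnorm H).
Notation hs := (hsub H).

Lemma PP n : orth_proj (P n).
Proof. apply (proj1 HP n). Qed.

Definition smul (psi : nat -> R) (B : opseq H) : opseq H := fun n x => hscal (psi n, 0) (B n x).

Definition Phi (psi : nat -> R) := forall w v, S (smul psi (gen P (rk w v))).

Lemma Sgen w v : S (gen P (rk w v)).
Proof. apply Gen, rk_compact. Qed.

Lemma gen_rk w v n x : gen P (rk w v) n x = hscal (inner (P n x) v) (P n w).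
Proof. unfold gen, rk. rewrite (proj2 (proj_lin _ (PP n))). reflexivity. Qed.

Lemma inner_P_self n a : inner (P n a) a = (ns (P n a), 0).
Proof. rewrite <- inner_self. rewrite (proj_adj (P n) a (P n a) (PP n)), (proj_idem (P n) a (PP n)), <- (proj_adj (P n) a a (PP n)). reflexivity. Qed.

Lemma Phi_ext p1 p2 : (forall n, p1 n = p2 n) -> Phi p1 -> Phi p2.
Proof. intros E H1. replace p2 with p1; auto. apply functional_extensionality; auto. Qed.

Lemma Phi_const c : Phi (fun _ => c).
Proof. intros w v. exact (proj1 (proj2 (proj2 (proj2 CS))) (c, 0) _ (Sgen w v)). Qed.

Lemma Phi_add p1 p2 : Phi p1 -> Phi p2 -> Phi (fun n => p1 n + p2 n).
Proof.
  intros H1 H2 w v. pose proof (proj1 (proj2 (proj2 CS)) _ _ (H1 w v) (H2 w v)) as Hs.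
  replace (smul (fun n => p1 n + p2 n) (gen P (rk w v))) with (seq_add (smul p1 (gen P (rk w v))) (smul p2 (gen P (rk w v)))); auto.
  apply functional_extensionality; intro n; apply functional_extensionality; intro x.
  unfold seq_add, smul. rewrite <- hscal_adds. f_equal. csimpl. apply Cext; ring.
Qed.

Lemma Phi_scal r p : Phi p -> Phi (fun n => r * p n).
Proof.
  intros H1 w v. pose proof (proj1 (proj2 (proj2 (proj2 CS))) (r, 0) _ (H1 w v)) as Hs.
  replace (smul (fun n => r * p n) (gen P (rk w v))) with (seq_scal (r, 0) (smul p (gen P (rk w v)))); auto.
  apply functional_extensionality; intro n; apply functional_extensionality; intro x.
  unfold seq_scal, smul. rewrite hscal_mul. f_equal. csimpl. apply Cext; ring.
Qed.

Lemma Phi_mulq a p : Phi p -> Phi (fun n => p n * ns (P n a)).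
Proof.
  intros H1 w v. pose proof (proj1 (proj2 (proj2 (proj2 (proj2 CS)))) _ _ (H1 w a) (Sgen a v)) as Hs.
  replace (smul (fun n => p n * ns (P n a)) (gen P (rk w v))) with (seq_mul (smul p (gen P (rk w a))) (gen P (rk a v))); auto.
  apply functional_extensionality; intro n; apply functional_extensionality; intro x.
  unfold seq_mul, smul. rewrite !gen_rk. rewrite (proj2 (proj_lin _ (PP n))), (proj_idem _ _ (PP n)).
  rewrite inner_scal, inner_P_self, !hscal_mul. f_equal.
  destruct (inner (P n x) v). csimpl. apply Cext; ring.
Qed.

Definition fval (f : R * H * R) (n : nat) : R :=
  let '(al, a, be) := f in al * ns (P n a) + be.

Definition prodF (fs : list (R * H * R)) (n : nat) : R := fold_right (fun f acc => fval f n * acc) 1 fs.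

Lemma Phi_prodF fs : Phi (prodF fs).
Proof.
  induction fs as [|[[al a] be] fs IH].
  - apply Phi_const.
  - apply (Phi_ext (fun n => al * (prodF fs n * ns (P n a)) + be * prodF fs n)).
    + intro n. unfold prodF, fval. simpl. fold (prodF fs n). ring.
    + apply Phi_add; apply Phi_scal; auto. apply Phi_mulq; auto.
Qed.

Definition Gk (k : nat) (B : opseq H) : opseq H := fun n x => if Nat.eq_dec n k then B n x else hzero.

Lemma inF_Gk k B : inF P B -> inF P (Gk k B).
Proof.
  intros [FB [SB [Sb [Bd Sbs]]]]. split; [|split].
  - intro n. unfold Gk. destruct (Nat.eq_dec n k).
    + apply FB.
    + split. split; intros; [rewrite hadd_zero|rewrite hscal_hzero]; reflexivity.
      intro x. rewrite lin_zero by apply proj_lin, PP. reflexivity.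
  - intro x. exists hzero. apply (hconv_ev_zero _ (Datatypes.S k)). intros n Hn. unfold Gk. destruct (Nat.eq_dec n k); [lia|reflexivity].
  - exists (Gk k Sb). split.
    + intros n x y. unfold Gk. destruct (Nat.eq_dec n k). apply Bd. rewrite inner_0l, inner_0r. reflexivity.
    + intro x. exists hzero. apply (hconv_ev_zero _ (Datatypes.S k)). intros n Hn. unfold Gk. destruct (Nat.eq_dec n k); [lia|reflexivity].
Qed.

Lemma gen_rk_bound w v n x : hn (gen P (rk w v) n x) <= hn w * hn v * hn x.
Proof.
  rewrite gen_rk, hnorm_scal. pose proof (cmod_inner (P n x) v). pose proof (proj_contr (P n) x (PP n)).
  pose proof (proj_contr (P n) w (PP n)). pose proof (hnorm_nonneg (P n x)). pose proof (hnorm_nonneg (P n w)).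
  pose proof (hnorm_nonneg v). pose proof (hnorm_nonneg w). pose proof (sqrt_pos (cn2 (inner (P n x) v))).
  apply Rle_trans with ((hn (P n x) * hn v) * hn w). apply Rmult_le_compat; auto.
  apply Rle_trans with ((hn x * hn v) * hn w). apply Rmult_le_compat_r; auto. apply Rmult_le_compat_r; auto. right; ring.
Qed.

Lemma Phi_delta k : (forall eps, eps > 0 -> exists psi, Phi psi /\ psi k = 1 /\ forall n, n <> k -> Rabs (psi n) <= eps) ->
  forall w v, S (Gk k (gen P (rk w v))).
Proof.
  intros Hpsi w v. apply (proj2 (proj2 (proj2 (proj2 (proj2 CS))))).
  - apply inF_Gk. apply (inFb_gen P HP). apply rk_compact.
  - intros eps He. set (c := hn w * hn v + 1). pose proof (hnorm_nonneg w). pose proof (hnorm_nonneg v).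
    assert (Hc : 0 < c) by (unfold c; nra).
    destruct (Hpsi (eps / c)) as [psi [Ph [Pk Pn]]]. apply Rdiv_lt_0_compat; lra.
    exists (smul psi (gen P (rk w v))). split. apply Ph.
    intros n x. unfold seq_sub, Gk, smul. destruct (Nat.eq_dec n k) as [->|Hnk].
    + rewrite Pk. replace (1, 0) with Defs.C1 by reflexivity. rewrite hscal_one, hsub_diag, hnorm_zero.
      pose proof (hnorm_nonneg x). nra.
    + rewrite hsub_comm_norm, hsub_0r, hnorm_scal_real. specialize (Pn n Hnk).
      pose proof (gen_rk_bound w v n x). pose proof (Rabs_pos (psi n)). pose proof (hnorm_nonneg x).
      pose proof (hnorm_nonneg (gen P (rk w v) n x)).
      apply Rle_trans with (eps / c * (c * hn x)). apply Rmult_le_compat; auto. unfold c; nra.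
      right. field. lra.
Qed.

End Phi.

Section Psi.
Context {H : Hilbert}.
Variable P : nat -> op H.
Hypothesis HP : filtration P.
Notation hn := (hnorm H).
Notation hs := (hsub H).

Lemma ns_conv (u : nat -> H) l : hconv H u l -> forall eps, eps > 0 -> exists N, forall n, (n >= N)%nat -> Rabs (ns (u n) - ns l) < eps.
Proof.
  intros Hu eps He. set (b := hn l). pose proof (hnorm_nonneg l) as Hb. fold b in Hb.
  set (del := Rmin 1 (eps / (2 * b + 2))).
  assert (Hd : 0 < del) by (unfold del; apply Rmin_glb_lt; [lra | apply Rdiv_lt_0_compat; lra]).
  destruct (Hu del Hd) as [N HN]. exists N. intros n Hn. specialize (HN n Hn).
  pose proof (hnorm_triangle l (hs (u n) l)) as T1. rewrite hadd_sub in T1.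
  pose proof (hnorm_triangle (u n) (hs l (u n))) as T2. rewrite hadd_sub, hsub_comm_norm in T2.
  fold b in T1, T2. set (a := hn (u n)) in *. set (d := hn (hs (u n) l)) in *.
  pose proof (hnorm_nonneg (u n)). pose proof (hnorm_nonneg (hs (u n) l)). fold a d in H0, H1.
  rewrite <- !hnorm_sq. fold a b.
  assert (del <= 1) by apply Rmin_l. assert (del <= eps / (2 * b + 2)) by apply Rmin_r.
  assert (d * (2 * b + 2) < eps).
  { apply Rlt_le_trans with (del * (2 * b + 2)). nra. apply Rle_trans with (eps / (2 * b + 2) * (2 * b + 2)). nra. right; field; lra. }
  apply Rabs_def1; nra.
Qed.

Lemma prodF_app fs1 fs2 n : prodF P (fs1 ++ fs2) n = prodF P fs1 n * prodF P fs2 n.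
Proof. induction fs1; unfold prodF in *; simpl. ring. rewrite IHfs1. ring. Qed.

Lemma prodF_repeat t p n : prodF P (repeat t p) n = (fval P t n) ^ p.
Proof. induction p; unfold prodF in *; simpl. reflexivity. rewrite IHp. reflexivity. Qed.

Lemma prodF_all1 fs k : (forall f, In f fs -> fval P f k = 1) -> prodF P fs k = 1.
Proof. induction fs; unfold prodF in *; simpl; intros Hf. reflexivity. rewrite Hf, IHfs; auto. ring. Qed.

Lemma prodF_zero fs m f : In f fs -> fval P f m = 0 -> prodF P fs m = 0.
Proof.
  induction fs; unfold prodF in *; simpl; intros Hin Hz. destruct Hin.
  destruct Hin as [<-|Hin]. rewrite Hz. ring. rewrite IHfs; auto. ring.
Qed.

Definition fb (f : R * H * R) : R := let '(al, a, be) := f in Rabs al * ns a + Rabs be.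
Definition cb (fs : list (R * H * R)) : R := fold_right (fun f acc => fb f * acc) 1 fs.

Lemma fb_bound f n : Rabs (fval P f n) <= fb f.
Proof.
  destruct f as [[al a] be]. simpl. pose proof (proj_ns (P n) a (proj1 (proj1 HP n))).
  pose proof (ns_nonneg (P n a)). pose proof (ns_nonneg (hs a (P n a))).
  eapply Rle_trans; [apply Rabs_triang|]. rewrite Rabs_mult. rewrite (Rabs_right (ns (P n a))) by lra.
  pose proof (Rabs_pos al). nra.
Qed.

Lemma cb_bound fs n : Rabs (prodF P fs n) <= cb fs.
Proof.
  induction fs; unfold prodF, cb in *; simpl. rewrite Rabs_R1. lra.
  rewrite Rabs_mult. apply Rmult_le_compat; auto using Rabs_pos, fb_bound.
Qed.

Lemma cb_nonneg fs : 0 <= cb fs.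
Proof. eapply Rle_trans; [apply Rabs_pos|apply (cb_bound fs 0)]. Qed.

Lemma exists_psi k : injective_filtration P -> forall eps, eps > 0 ->
  exists fs, prodF P fs k = 1 /\ forall n, n <> k -> Rabs (prodF P fs n) <= eps.
Proof.
  intros Inj eps He.
  destruct (not_identity P HP k Inj) as [a0 Ha0].
  set (L := ns a0). set (d0 := ns (P k a0) - L). assert (Hd0 : d0 <> 0) by (unfold d0, L; lra).
  set (t := (/ d0, a0, - L / d0)).
  assert (tk : fval P t k = 1). { unfold t; simpl. fold L. fold d0. field_simplify; auto. unfold d0. field. auto. }
  destruct (ns_conv (fun n => P n a0) a0 (proj2 HP a0) (Rabs d0 / 2)) as [M HM].
  { apply Rlt_gt. apply Rdiv_lt_0_compat; [apply Rabs_pos_lt; auto | lra]. }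
  assert (tM : forall n, (n >= M)%nat -> Rabs (fval P t n) <= 1/2).
  { intros n Hn. specialize (HM n Hn). simpl in HM. unfold t; simpl.
    replace (/ d0 * ns (P n a0) + - L / d0) with ((ns (P n a0) - L) / d0) by (field; auto).
    unfold Rdiv. rewrite Rabs_mult, Rabs_inv. fold L in HM. pose proof (Rabs_pos_lt d0 Hd0).
    apply (Rmult_le_reg_r (Rabs d0)). lra. rewrite Rmult_assoc, Rinv_l by lra. lra. }
  assert (Sep : forall m, exists a, m <> k -> ns (P m a) <> ns (P k a)).
  { intro m. destruct (Nat.eq_dec m k) as [->|Hmk]. exists hzero. intro C; lia.
    destruct (separate P HP k m Inj Hmk) as [a Ha]. exists a. auto. }
  apply fchoice in Sep. destruct Sep as [sep Hsep].
  set (dm := fun m => ns (P k (sep m)) - ns (P m (sep m))).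
  set (s := fun m => (/ dm m, sep m, - ns (P m (sep m)) / dm m)).
  set (fin := map s (filter (fun m => negb (Nat.eqb m k)) (seq 0 M))).
  assert (Hfin1 : forall f, In f fin -> fval P f k = 1).
  { intros f Hf. unfold fin in Hf. apply in_map_iff in Hf. destruct Hf as [m [<- Hm]].
    apply filter_In in Hm. destruct Hm as [_ Hm]. apply negb_true_iff, Nat.eqb_neq in Hm.
    specialize (Hsep m Hm). assert (dm m <> 0) by (unfold dm; lra).
    unfold s. simpl. fold (dm m). field_simplify; auto. unfold dm. field. unfold dm in H0. auto. }
  assert (Hfin0 : forall n, (n < M)%nat -> n <> k -> prodF P fin n = 0).
  { intros n Hn Hnk. apply (prodF_zero _ _ (s n)).
    - unfold fin. apply in_map. apply filter_In. split. apply in_seq. lia. apply negb_true_iff, Nat.eqb_neq; auto.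
    - specialize (Hsep n Hnk). assert (dm n <> 0) by (unfold dm; lra). unfold s. simpl. field. auto. }
  set (c := cb fin). pose proof (cb_nonneg fin) as Hc. fold c in Hc.
  destruct (pow_lt_1_zero (1/2) ltac:(rewrite Rabs_right; lra) (eps / (c + 1))) as [p Hp].
  { apply Rdiv_lt_0_compat; lra. }
  specialize (Hp p (le_n p)). rewrite Rabs_right in Hp by (apply Rle_ge, pow_le; lra).
  exists (repeat t p ++ fin). split.
  - rewrite prodF_app, prodF_repeat, tk, pow1, prodF_all1; auto. ring.
  - intros n Hnk. rewrite prodF_app, prodF_repeat, Rabs_mult.
    destruct (lt_dec n M) as [Hlt|Hge].
    + rewrite Hfin0, Rabs_R0 by auto. pose proof (Rabs_pos (fval P t n ^ p)). lra.
    + assert (T : Rabs (fval P t n ^ p) <= (1/2) ^ p).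
      { rewrite <- RPow_abs. apply pow_incr. split. apply Rabs_pos. apply tM. lia. }
      pose proof (cb_bound fin n). fold c in H0. pose proof (Rabs_pos (prodF P fin n)).
      pose proof (Rabs_pos (fval P t n ^ p)). pose proof (pow_le (1/2) p ltac:(lra)).
      apply Rle_trans with ((1/2)^p * c). apply Rmult_le_compat; auto.
      apply Rle_trans with (eps / (c + 1) * (c + 1)). nra. right. field. lra.
Qed.

End Psi.

Section IfDir.
Context {H : Hilbert}.
Variable P : nat -> op H.
Hypothesis HP : filtration P.
Hypothesis Inj : injective_filtration P.
Notation hn := (hnorm H).
Notation hs := (hsub H).

Lemma lin_sumR (T : op H) ps y : is_linear T ->
  T (sumR ps y) = fold_right (fun p acc => hadd (hscal (inner y (snd p)) (T (fst p))) acc) hzero ps.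
Proof.
  intro L. induction ps as [|p ps IH]; unfold sumR in *; simpl.
  - apply lin_zero; auto.
  - rewrite (proj1 L), (proj2 L), IH. reflexivity.
Qed.

Theorem if_dir : forall A : opseq H, inG P A -> inJ P A.
Proof.
  intros A [FA GA] S CS Gen.
  assert (S0 : S (seq_zero H)) by exact (proj1 (proj2 CS)).
  assert (Sadd : forall B C, S B -> S C -> S (seq_add B C)) by exact (proj1 (proj2 (proj2 CS))).
  assert (S3 : forall k w v, S (Gk k (gen P (rk w v)))).
  { intros k. apply (Phi_delta P HP S CS k). intros eps He.
    destruct (exists_psi P HP k Inj eps He) as [fs [H1 H2]].
    exists (prodF P fs). split; [|split]; auto. apply (Phi_prodF P HP S CS Gen). }
  assert (S2 : forall k, S (Gk k A)).
  { intro k. destruct (proj_decomp (P k) (proj1 (proj1 HP k)) (proj2 (proj1 HP k))) as [ps Hps].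
    assert (Cl : forall qs : list (H * H), S (fun n x => if Nat.eq_dec n k then
        fold_right (fun p acc => hadd (gen P (rk (A k (fst p)) (snd p)) n x) acc) hzero qs else hzero)).
    { induction qs as [|q qs IH].
      - replace (fun n x => if Nat.eq_dec n k then fold_right (fun p acc => hadd (gen P (rk (A k (fst p)) (snd p)) n x) acc) hzero nil else @hzero H)
          with (seq_zero H); auto.
        apply functional_extensionality; intro n; apply functional_extensionality; intro x.
        unfold seq_zero. simpl. destruct (Nat.eq_dec n k); reflexivity.
      - pose proof (Sadd _ _ (S3 k (A k (fst q)) (snd q)) IH) as Hs.
        match goal with |- S ?F => replace F with (seq_add (Gk k (gen P (rk (A k (fst q)) (snd q))))
          (fun n x => if Nat.eq_dec n k then fold_right (fun p acc => hadd (gen P (rk (A k (fst p)) (snd p)) n x) acc) hzero qs else hzero)); auto end.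
        apply functional_extensionality; intro n; apply functional_extensionality; intro x.
        unfold seq_add, Gk. simpl. destruct (Nat.eq_dec n k); auto. apply hadd_zero. }
    specialize (Cl ps).
    match goal with Cl : S ?F |- _ => replace (Gk k A) with F; auto end.
    apply functional_extensionality; intro n; apply functional_extensionality; intro x.
    unfold Gk. destruct (Nat.eq_dec n k) as [->|]; auto.
    destruct (proj1 FA k) as [LA EA].
    rewrite <- (AP_eq P HP A k x EA), <- (proj_idem (P k) x (proj1 (proj1 HP k))), Hps, lin_sumR by auto.
    clear Hps Cl. induction ps as [|p ps IH]; simpl; auto. f_equal; auto.
    rewrite (gen_rk P HP), (PA_eq P HP A k _ EA). reflexivity. }
  set (tr := fun N n x => if lt_dec n N then A n x else @hzero H).
  assert (S1 : forall N, S (tr N)).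
  { induction N as [|N IH].
    - assert (E : tr 0%nat = seq_zero H).
      { apply functional_extensionality; intro n; apply functional_extensionality; intro x.
        unfold tr, seq_zero. destruct (lt_dec n 0); [lia|reflexivity]. }
      rewrite E; auto.
    - replace (tr (Datatypes.S N)) with (seq_add (tr N) (Gk N A)). apply Sadd; auto.
      apply functional_extensionality; intro n; apply functional_extensionality; intro x.
      unfold tr, seq_add, Gk. destruct (lt_dec n N), (Nat.eq_dec n N), (lt_dec n (Datatypes.S N)); try lia.
      + apply hadd_zero.
      + subst. apply hadd_0l.
      + apply hadd_zero. }
  apply (proj2 (proj2 (proj2 (proj2 (proj2 CS))))); auto.
  intros eps He. destruct (GA eps He) as [N HN]. exists (tr N). split; auto.
  intros n x. unfold seq_sub, tr. destruct (lt_dec n N).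
  - rewrite hsub_diag, hnorm_zero. pose proof (hnorm_nonneg x). nra.
  - rewrite hsub_0r. apply HN. lia.
Qed.

End IfDir.

Theorem proposition4p1 (H : Hilbert) (P : nat -> op H) :
  filtration P ->
  (forall n, exists x : H, P n x <> hzero) ->
  ((forall A : opseq H, inG P A -> inJ P A) <-> injective_filtration P).
Proof.
  intros HP Hnz. split.
  - apply (only_if P HP Hnz).
  - intro Inj. apply (if_dir P HP Inj).
Qed.
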